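(* Let $0<3x_0<L$, $\gamma=\gamma(x_0,L)$, $\lambda=\lambda(x_0,L)=\frac{2L}{L+x_0}$, and let $\mathcal V$ be a one-sided admissible variation of $\gamma$. Let $\varphi,\varphi_\tau,\psi,\psi_\tau\in C^\infty[0,2L]$ be defined by $X=\varphi N+\varphi_\tau\dot\gamma$ and $X'=\psi N+\psi_\tau\dot\gamma$. Then $$\left.\frac{d^2\mathcal F(\mathcal V(\cdot,t))}{dt^2}\right|_{t=0^+}=\int_0^{2L}\Big(2H\varphi^2-\frac{2\dot\varphi^2}{H}+\frac{2\ddot\varphi^2}{H^3}\Big)ds+\lambda\int_0^{2L}\big(\psi+H\varphi_\tau^2+2\varphi\dot\varphi_\tau\big)ds+\Big[\frac{\dot\psi-2\dot\varphi\dot\varphi_\tau}{H^2}\Big]_0^{2L}.$$ If moreover $\mathcal V$ is an (two-sided) admissible variation, then $\dot\varphi(0)=\dot\varphi(2L)=0$, $\dot\psi(0)\le0$, $\dot\psi(2L)\ge0$, and hence $$\left.\frac{d^2\mathcal F(\mathcal V(\cdot,t))}{dt^2}\right|_{t=0}=\int_0^{2L}\Big(2H\varphi^2-\frac{2\dot\varphi^2}{H}+\frac{2\ddot\varphi^2}{H^3}\Big)ds+\lambda\int_0^{2L}\big(\psi+H\varphi_\tau^2+2\varphi\dot\varphi_\tau\big)ds+\Big[\frac{\dot\psi}{H^2}\Big]_0^{2L}$$ $$\ge\int_0^{2L}\Big(2H\varphi^2-\frac{2\dot\varphi^2}{H}+\frac{2\ddot\varphi^2}{H^3}\Big)ds+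\lambda\int_0^{2L}\big(\psi+H\varphi_\tau^2+2\varphi\dot\varphi_\tau\big)ds.$$
   Context: Notation: $(\xi,\eta)^\perp=(\eta,-\xi)$; for a regular curve $\gamma\in C^2([0,2L],\mathbb R^2)$, curvature $H=\langle\dot\gamma,\ddot\gamma^\perp\rangle/|\dot\gamma|^3$, normal $N=\dot\gamma^\perp/|\dot\gamma|$; strictly counterclockwise means $H>0$. A curve $\gamma=(x,y)$ is admissible if $\gamma\in C^\infty([0,2L],\mathbb R^2)$ is regular, strictly counterclockwise, injective, $\gamma(0)=(x_0,0)$, $\gamma(2L)=(-x_0,0)$, $y>0$ on $(0,2L)$. $\mathcal F(\gamma)=\int_0^{2L}|\dot\gamma|H^{-1}ds$. An admissible (resp. one-sided admissible) variation is a smooth $\mathcal V:[0,2L]\times[-t_{\mathcal V},t_{\mathcal V}]\to\mathbb R^2$ (resp. $[0,2L]\times[0,t_{\mathcal V}]$) with $\mathcal V(\cdot,0)=\gamma$ and every $\mathcal V(\cdot,t)$ admissible; velocity $X=\partial_t\mathcal V|_{t=0}$, acceleration $X'=\partial_t^2\mathcal V|_{t=0}$ (one-sided derivatives in the one-sided case). For $0<3x_0<L$: with $\sigma=\pi\sqrt{x_0/(L+x_0)}$, $k=L/\sin\sigma$, $a(s)=\arcsin((s-L)/k)$, $\gamma(x_0,L)=(x,y)$ on $[0,2L]$ with $x(s)=-\frac k2\big(\frac{\sigma}{\pi+\sigma}\sin(\tfrac{\pi+\sigma}{\sigma}a(s))+\frac{\sigma}{\pi-\sigma}\sin(\tfrac{\pi-\sigma}{\sigma}a(s))\big)$,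 $y(s)=\frac k2\big(\frac{\sigma}{\pi+\sigma}\cos(\tfrac{\pi+\sigma}{\sigma}a(s))+\frac{\sigma}{\pi-\sigma}\cos(\tfrac{\pi-\sigma}{\sigma}a(s))\big)+\frac{\pi x_0}{\sigma\tan\sigma}$. It is admissible, parametrized by arc length, with curvature $H(s)=\frac{\pi}{\sigma\sqrt{k^2-(s-L)^2}}$ satisfying $2+\frac{d^2(H^{-2})}{ds^2}=\lambda(x_0,L)$. *)

(* Defs.v *)
From Stdlib Require Import Reals.
From Coquelicot Require Import Coquelicot.
Open Scope R_scope.

(** C^infty on [a,b]: smooth on an open neighbourhood (a-eps, b+eps).
    (Equivalent to the usual notion by Seeley/Whitney extension.) *)
Definition smooth_near (a b : R) (f : R -> R) : Prop :=
  exists eps : R, 0 < eps /\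
    forall (n : nat) (s : R), a - eps < s < b + eps -> ex_derive_n f n s.

Definition d_s (f : R -> R -> R) : R -> R -> R :=
  fun s t => Derive (fun u => f u t) s.
Definition d_t (f : R -> R -> R) : R -> R -> R :=
  fun s t => Derive (fun u => f s u) t.

Fixpoint C2k (k : nat) (U : R -> R -> Prop) (f : R -> R -> R) : Prop :=
  match k with
  | O => forall s t, U s t ->
           continuous (fun p : R * R => f (fst p) (snd p)) (s, t)
  | S k' => (forall s t, U s t ->
               ex_derive (fun u => f u t) s /\ ex_derive (fun u => f s u) t)
            /\ C2k k' U (d_s f) /\ C2k k' U (d_t f)
  end.

Definition smooth2_on (a b c d : R) (f : R -> R -> R) : Prop :=
  exists eps : R, 0 < eps /\
    forall k : nat,
      C2k k (fun s t => a - eps < s < b + eps /\ c - eps < t < d + eps) f.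

Definition speed (x y : R -> R) (s : R) : R :=
  sqrt (Derive x s ^ 2 + Derive y s ^ 2).

(** H = <gamma', (gamma'')^perp> / |gamma'|^3, with (xi,eta)^perp = (eta,-xi) *)
Definition curv (x y : R -> R) (s : R) : R :=
  (Derive x s * Derive (Derive y) s + Derive y s * (- Derive (Derive x) s))
  / speed x y s ^ 3.

Definition normal_x (x y : R -> R) (s : R) : R := Derive y s / speed x y s.
Definition normal_y (x y : R -> R) (s : R) : R := - Derive x s / speed x y s.

Definition admissible (x0 L : R) (x y : R -> R) : Prop :=
  smooth_near 0 (2 * L) x /\ smooth_near 0 (2 * L) y /\
  (forall s, 0 <= s <= 2 * L -> 0 < Derive x s ^ 2 + Derive y s ^ 2) /\
  (forall s, 0 <= s <= 2 * L -> 0 < curv x y s) /\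
  (forall s1 s2, 0 <= s1 <= 2 * L -> 0 <= s2 <= 2 * L ->
     x s1 = x s2 -> y s1 = y s2 -> s1 = s2) /\
  x 0 = x0 /\ y 0 = 0 /\ x (2 * L) = - x0 /\ y (2 * L) = 0 /\
  (forall s, 0 < s < 2 * L -> 0 < y s).

Definition energyF (L : R) (x y : R -> R) : R :=
  RInt (fun s => speed x y s / curv x y s) 0 (2 * L).

Definition sigma0 (x0 L : R) : R := PI * sqrt (x0 / (L + x0)).
Definition kk (x0 L : R) : R := L / sin (sigma0 x0 L).
Definition aa (x0 L : R) (s : R) : R := asin ((s - L) / kk x0 L).

Definition gam_x (x0 L : R) (s : R) : R :=
  let sg := sigma0 x0 L in let k := kk x0 L in let a := aa x0 L s in
  - (k / 2) * (sg / (PI + sg) * sin ((PI + sg) / sg * a)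
               + sg / (PI - sg) * sin ((PI - sg) / sg * a)).

Definition gam_y (x0 L : R) (s : R) : R :=
  let sg := sigma0 x0 L in let k := kk x0 L in let a := aa x0 L s in
  (k / 2) * (sg / (PI + sg) * cos ((PI + sg) / sg * a)
             + sg / (PI - sg) * cos ((PI - sg) / sg * a))
  + PI * x0 / (sg * tan sg).

Definition lambda0 (x0 L : R) : R := 2 * L / (L + x0).

Definition one_sided_variation (x0 L : R) (x y : R -> R)
    (Vx Vy : R -> R -> R) (tV : R) : Prop :=
  0 < tV /\
  smooth2_on 0 (2 * L) 0 tV Vx /\ smooth2_on 0 (2 * L) 0 tV Vy /\
  (forall s, 0 <= s <= 2 * L -> Vx s 0 = x s /\ Vy s 0 = y s) /\
  (forall t, 0 <= t <= tV ->
     admissible x0 L (fun s => Vx s t) (fun s => Vy s t)).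

Definition admissible_variation (x0 L : R) (x y : R -> R)
    (Vx Vy : R -> R -> R) (tV : R) : Prop :=
  0 < tV /\
  smooth2_on 0 (2 * L) (- tV) tV Vx /\ smooth2_on 0 (2 * L) (- tV) tV Vy /\
  (forall s, 0 <= s <= 2 * L -> Vx s 0 = x s /\ Vy s 0 = y s) /\
  (forall t, - tV <= t <= tV ->
     admissible x0 L (fun s => Vx s t) (fun s => Vy s t)).

Definition vel (V : R -> R -> R) (s : R) : R := Derive (fun t => V s t) 0.
Definition acc (V : R -> R -> R) (s : R) : R :=
  Derive (fun t => Derive (fun u => V s u) t) 0.

Definition is_rderiv (f : R -> R) (t l : R) : Prop :=
  filterlim (fun h => (f (t + h) - f t) / h) (at_right 0) (locally l).

Definition Fvar (L : R) (Vx Vy : R -> R -> R) (t : R) : R :=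
  energyF L (fun s => Vx s t) (fun s => Vy s t).

Definition I1 (L : R) (x y : R -> R) (phi : R -> R) : R :=
  RInt (fun s => 2 * curv x y s * phi s ^ 2
                 - 2 * Derive phi s ^ 2 / curv x y s
                 + 2 * Derive (Derive phi) s ^ 2 / curv x y s ^ 3) 0 (2 * L).

Definition I2 (L : R) (x y : R -> R) (phi phit psi : R -> R) : R :=
  RInt (fun s => psi s + curv x y s * phit s ^ 2
                 + 2 * phi s * Derive phit s) 0 (2 * L).

(* Main.v *)
Require Import Defs.
From Stdlib Require Import Reals Lra Lia Psatz ClassicalEpsilon.
From Coquelicot Require Import Coquelicot.
Open Scope R_scope.

Definition openR (U : R -> R -> Prop) := forall s t, U s t ->
  exists e, 0 < e /\ forall s' t', Rabs (s' - s) < e -> Rabs (t' - t) < e -> U s' t'.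

Lemma openR_l2d U P s t : openR U -> U s t -> (forall s' t', U s' t' -> P s' t') ->
  locally_2d P s t.
Proof.
intros HU Hst HP. destruct (HU s t Hst) as [e [He H]].
exists (mkposreal e He). intros u v Hu Hv. apply HP, H; assumption.
Qed.

Lemma openR_loc U P s t : openR U -> U s t -> (forall s' t', U s' t' -> P s' t') ->
  locally (s, t) (fun z : R * R => P (fst z) (snd z)).
Proof.
intros. apply (locally_2d_locally P s t). eapply openR_l2d; eauto.
Qed.

Lemma openR_loc_s U P s t : openR U -> U s t -> (forall s', U s' t -> P s') ->
  locally s P.
Proof.
intros HU Hst HP. destruct (HU s t Hst) as [e [He H]].
exists (mkposreal e He). intros u Hu. apply HP, H. exact Hu.
rewrite Rminus_diag, Rabs_R0; exact He.
Qed.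

Lemma openR_loc_t U P s t : openR U -> U s t -> (forall t', U s t' -> P t') ->
  locally t P.
Proof.
intros HU Hst HP. destruct (HU s t Hst) as [e [He H]].
exists (mkposreal e He). intros u Hu. apply HP, H.
rewrite Rminus_diag, Rabs_R0; exact He. exact Hu.
Qed.

Lemma C2k_ext k U f g : openR U -> (forall s t, U s t -> f s t = g s t) ->
  C2k k U f -> C2k k U g.
Proof.
intro HU. revert f g. induction k as [|k IH]; intros f g Hfg Hf.
- intros s t Hst. eapply continuous_ext_loc; [|apply (Hf s t Hst)].
  apply (openR_loc U (fun a b => f a b = g a b) s t HU Hst).
  intros; auto.
- destruct Hf as [H0 [H1 H2]]. split; [|split].
  + intros s t Hst. destruct (H0 s t Hst) as [Ha Hb]. split.
    * eapply ex_derive_ext_loc; [|exact Ha].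
      apply (openR_loc_s U _ s t HU Hst). intros; auto.
    * eapply ex_derive_ext_loc; [|exact Hb].
      apply (openR_loc_t U _ s t HU Hst). intros; auto.
  + apply (IH (d_s f)); auto. intros s t Hst. unfold d_s.
    apply Derive_ext_loc. apply (openR_loc_s U _ s t HU Hst). intros; auto.
  + apply (IH (d_t f)); auto. intros s t Hst. unfold d_t.
    apply Derive_ext_loc. apply (openR_loc_t U _ s t HU Hst). intros; auto.
Qed.

Lemma C2k_plus k U f g : openR U -> C2k k U f -> C2k k U g ->
  C2k k U (fun s t => f s t + g s t).
Proof.
intro HU. revert f g. induction k as [|k IH]; intros f g Hf Hg.
- intros s t Hst. apply (continuous_plus (fun p : R*R => f (fst p) (snd p))
    (fun p : R*R => g (fst p) (snd p))); auto.
- destruct Hf as [F0 [F1 F2]], Hg as [G0 [G1 G2]]. split; [|split].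
  + intros s t Hst. destruct (F0 s t Hst), (G0 s t Hst). split;
    apply (ex_derive_plus (fun u => f _ _) (fun u => g _ _)); auto.
  + apply (C2k_ext _ _ (fun s t => d_s f s t + d_s g s t)); auto.
    intros s t Hst. destruct (F0 s t Hst), (G0 s t Hst). unfold d_s.
    rewrite Derive_plus; auto.
  + apply (C2k_ext _ _ (fun s t => d_t f s t + d_t g s t)); auto.
    intros s t Hst. destruct (F0 s t Hst), (G0 s t Hst). unfold d_t.
    rewrite Derive_plus; auto.
Qed.

Definition C2le k U f := forall j, (j <= k)%nat -> C2k j U f.

Lemma C2le_ds k U f : C2le (S k) U f -> C2le k U (d_s f).
Proof. intros H j Hj. apply (H (S j)); lia. Qed.
Lemma C2le_dt k U f : C2le (S k) U f -> C2le k U (d_t f).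
Proof. intros H j Hj. apply (H (S j)); lia. Qed.
Lemma C2le_S k U f : C2le (S k) U f -> C2le k U f.
Proof. intros H j Hj. apply H; lia. Qed.

Lemma C2k_mult k U f g : openR U -> C2le k U f -> C2le k U g ->
  C2k k U (fun s t => f s t * g s t).
Proof.
intro HU. revert f g. induction k as [|k IH]; intros f g Hf Hg.
- intros s t Hst. apply (continuous_mult (fun p : R*R => f (fst p) (snd p))
    (fun p : R*R => g (fst p) (snd p))); [apply (Hf 0%nat)|apply (Hg 0%nat)]; auto.
- destruct (Hf (S k) (le_n _)) as [F0 _], (Hg (S k) (le_n _)) as [G0 _].
  split; [|split].
  + intros s t Hst. destruct (F0 s t Hst), (G0 s t Hst). split;
    apply (ex_derive_mult (fun u => f _ _) (fun u => g _ _)); auto.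
  + apply (C2k_ext _ _ (fun s t => d_s f s t * g s t + f s t * d_s g s t)); auto.
    * intros s t Hst. destruct (F0 s t Hst), (G0 s t Hst). unfold d_s.
      rewrite Derive_mult; auto.
    * apply C2k_plus; auto; apply IH; auto using C2le_ds, C2le_S.
  + apply (C2k_ext _ _ (fun s t => d_t f s t * g s t + f s t * d_t g s t)); auto.
    * intros s t Hst. destruct (F0 s t Hst), (G0 s t Hst). unfold d_t.
      rewrite Derive_mult; auto.
    * apply C2k_plus; auto; apply IH; auto using C2le_dt, C2le_S.
Qed.

Lemma C2le_mult k U f g : openR U -> C2le k U f -> C2le k U g ->
  C2le k U (fun s t => f s t * g s t).
Proof.
intros HU Hf Hg j Hj. apply C2k_mult; auto; intros i Hi; [apply Hf|apply Hg]; lia.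
Qed.

Lemma C2le_plus k U f g : openR U -> C2le k U f -> C2le k U g ->
  C2le k U (fun s t => f s t + g s t).
Proof. intros HU Hf Hg j Hj. apply C2k_plus; auto. Qed.

Lemma C2k_const k U c : openR U -> C2k k U (fun _ _ => c).
Proof.
intro HU. revert c. induction k as [|k IH]; intro c.
- intros s t _. apply continuous_const.
- split; [|split].
  + intros; split; apply ex_derive_const.
  + apply (C2k_ext _ _ (fun _ _ => 0)); auto.
    intros; unfold d_s; rewrite Derive_const; auto.
  + apply (C2k_ext _ _ (fun _ _ => 0)); auto.
    intros; unfold d_t; rewrite Derive_const; auto.
Qed.

Lemma C2le_const k U c : openR U -> C2le k U (fun _ _ => c).
Proof. intros HU j _. apply C2k_const; auto. Qed.

Lemma inv_aux (a b : R) : b <> 0 -> -1 * a * (/ b * / b) = - a / b ^ 2.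
Proof. intros; field; auto. Qed.

Lemma C2le_inv k U f : openR U -> (forall s t, U s t -> f s t <> 0) ->
  C2le k U f -> C2le k U (fun s t => / f s t).
Proof.
intros HU Hnz. revert f Hnz. induction k as [|k IH]; intros f Hnz Hf.
- intros j Hj. assert (j = 0%nat) by lia. subst j.
  intros s t Hst. apply (continuous_comp (fun p : R*R => f (fst p) (snd p)) Rinv).
  apply (Hf 0%nat); auto. apply continuous_Rinv. apply Hnz; auto.
- assert (IHk := IH f Hnz (C2le_S _ _ _ Hf)).
  intros j Hj. destruct (Nat.eq_dec j (S k)) as [->|Hne]; [|apply IHk; lia].
  destruct (Hf (S k) (le_n _)) as [F0 _].
  split; [|split].
  + intros s t Hst. destruct (F0 s t Hst). split;
    apply (ex_derive_inv (fun u => f _ _)); auto.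
  + apply (C2k_ext _ _ (fun s t => (-1 * d_s f s t) * (/ f s t * / f s t))); auto.
    * intros s t Hst. destruct (F0 s t Hst). unfold d_s.
      rewrite Derive_inv; auto. apply inv_aux; auto.
    * apply C2k_mult; auto. apply C2le_mult; auto. apply C2le_const; auto.
      apply C2le_ds; auto. apply C2le_mult; auto.
  + apply (C2k_ext _ _ (fun s t => (-1 * d_t f s t) * (/ f s t * / f s t))); auto.
    * intros s t Hst. destruct (F0 s t Hst). unfold d_t.
      rewrite Derive_inv; auto. apply inv_aux; auto.
    * apply C2k_mult; auto. apply C2le_mult; auto. apply C2le_const; auto.
      apply C2le_dt; auto. apply C2le_mult; auto.
Qed.

Definition Sm U f := forall k, C2k k U f.
Lemma Sm_le U f k : Sm U f -> C2le k U f.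
Proof. intros H j _; apply H. Qed.
Lemma Sm_ds U f : Sm U f -> Sm U (d_s f).
Proof. intros H k. apply (H (S k)). Qed.
Lemma Sm_dt U f : Sm U f -> Sm U (d_t f).
Proof. intros H k. apply (H (S k)). Qed.
Lemma Sm_plus U f g : openR U -> Sm U f -> Sm U g -> Sm U (fun s t => f s t + g s t).
Proof. intros HU Hf Hg k. apply C2k_plus; auto. Qed.
Lemma Sm_mult U f g : openR U -> Sm U f -> Sm U g -> Sm U (fun s t => f s t * g s t).
Proof. intros HU Hf Hg k. apply C2k_mult; auto using Sm_le. Qed.
Lemma Sm_const U c : openR U -> Sm U (fun _ _ => c).
Proof. intros HU k. apply C2k_const; auto. Qed.
Lemma Sm_inv U f : openR U -> (forall s t, U s t -> f s t <> 0) -> Sm U f ->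
  Sm U (fun s t => / f s t).
Proof. intros HU Hn Hf k. apply (C2le_inv k); auto using Sm_le. Qed.
Lemma Sm_ext U f g : openR U -> (forall s t, U s t -> f s t = g s t) -> Sm U f -> Sm U g.
Proof. intros HU H Hf k. eapply C2k_ext; eauto. Qed.
Lemma C2k_sub k (U V : R -> R -> Prop) f : (forall s t, V s t -> U s t) ->
  C2k k U f -> C2k k V f.
Proof.
intro HUV. revert f. induction k as [|k IH]; intros f Hf.
- intros s t Hst; apply Hf; auto.
- destruct Hf as [A [B C]]. split; [|split]; auto.
Qed.
Lemma Sm_sub (U V : R -> R -> Prop) f : (forall s t, V s t -> U s t) -> Sm U f -> Sm V f.
Proof. intros H Hf k. eapply C2k_sub; eauto. Qed.
Lemma Sm_cont U f s t : Sm U f -> U s t -> continuity_2d_pt f s t.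
Proof. intros H Hst. apply continuity_2d_pt_filterlim. apply (H 0%nat); auto. Qed.
Lemma Sm_exs U f s t : Sm U f -> U s t -> ex_derive (fun u => f u t) s.
Proof. intros H Hst. apply (H 1%nat); auto. Qed.
Lemma Sm_ext' U f s t : Sm U f -> U s t -> ex_derive (fun u => f s u) t.
Proof. intros H Hst. apply (H 1%nat); auto. Qed.

Lemma Sm_schwarz U f s t : openR U -> Sm U f -> U s t ->
  d_s (d_t f) s t = d_t (d_s f) s t.
Proof.
intros HU Hf Hst. unfold d_s, d_t.
apply Schwarz.
- apply (openR_l2d U _ s t HU Hst). intros u v Huv.
  repeat split.
  + apply (Sm_exs U f); auto.
  + apply (Sm_ext' U f); auto.
  + apply (Sm_exs U (d_t f)); auto using Sm_dt.
  + apply (Sm_ext' U (d_s f)); auto using Sm_ds.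
- apply (Sm_cont U (d_s (d_t f))); auto using Sm_ds, Sm_dt.
- apply (Sm_cont U (d_t (d_s f))); auto using Sm_ds, Sm_dt.
Qed.

Lemma cont2d_cont_s f s t : continuity_2d_pt f s t -> continuous (fun u => f u t) s.
Proof.
intro H. apply continuity_2d_pt_filterlim in H.
apply (continuous_comp_2 (fun u : R => u) (fun _ : R => t) f).
apply continuous_id. apply continuous_const. exact H.
Qed.

Lemma cont2d_cont_t f s t : continuity_2d_pt f s t -> continuous (fun u => f s u) t.
Proof.
intro H. apply continuity_2d_pt_filterlim in H.
apply (continuous_comp_2 (fun _ : R => s) (fun u : R => u) f).
apply continuous_const. apply continuous_id. exact H.
Qed.

Lemma cont2d_swap f s t : continuity_2d_pt f s t ->
  continuity_2d_pt (fun u v => f v u) t s.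
Proof.
intros H eps. destruct (H eps) as [d Hd]. exists d. intros u v Hu Hv.
apply Hd; auto.
Qed.

Lemma param_deriv U f t0 a b d : a <= b -> 0 < d -> openR U -> Sm U f ->
  (forall s t, a <= s <= b -> Rabs (t - t0) < d -> U s t) ->
  is_derive (fun t => RInt (fun s => f s t) a b) t0 (RInt (fun s => d_t f s t0) a b).
Proof.
intros Hab Hd HU Hf HR.

apply (is_derive_RInt_param (fun u v => f v u) a b t0).
- exists (mkposreal d Hd). intros y Hy s Hs. rewrite Rmin_left, Rmax_right in Hs; auto.
  apply (Sm_ext' U f s y); auto.
- intros s Hs. rewrite Rmin_left, Rmax_right in Hs; auto.
  apply (cont2d_swap (d_t f) s t0). apply (Sm_cont U); auto using Sm_dt.
  apply HR; auto. rewrite Rminus_diag, Rabs_R0; auto.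
- exists (mkposreal d Hd). intros y Hy. apply (@ex_RInt_continuous R_CompleteNormedModule).
  intros s Hs. rewrite Rmin_left, Rmax_right in Hs; auto.
  apply cont2d_cont_s. apply (Sm_cont U); auto.
Qed.

Lemma tube f L t0 : 0 < L ->
  (forall s, 0 <= s <= 2 * L -> continuity_2d_pt f s t0) ->
  (forall s, 0 <= s <= 2 * L -> 0 < f s t0) ->
  exists d, 0 < d /\ forall s t, - d < s < 2 * L + d -> Rabs (t - t0) < d -> 0 < f s t.
Proof.
intros HL Hc Hp.
assert (Hex : forall s, exists r : posreal, 0 <= s <= 2 * L ->
   forall u v, Rabs (u - s) < r -> Rabs (v - t0) < r -> 0 < f u v).
{ intro s. destruct (Rle_dec 0 s) as [H1|H1]; [destruct (Rle_dec s (2*L)) as [H2|H2]|].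
  - assert (Hps := Hp s (conj H1 H2)). destruct (Hc s (conj H1 H2) (mkposreal _ Hps)) as [r Hr].
    exists r. intros _ u v Hu Hv. specialize (Hr u v Hu Hv). simpl in Hr.
    apply Rabs_def2 in Hr. lra.
  - exists (mkposreal 1 Rlt_0_1). intros; lra.
  - exists (mkposreal 1 Rlt_0_1). intros; lra. }
set (rho := fun s => proj1_sig (constructive_indefinite_description _ (Hex s))).
assert (Hrho : forall s, 0 <= s <= 2 * L -> forall u v, Rabs (u - s) < rho s -> Rabs (v - t0) < rho s -> 0 < f u v).
{ intro s. unfold rho. destruct (constructive_indefinite_description _ (Hex s)) as [r Hr]. exact Hr. }
assert (Hdp : forall s, 0 < rho s / 2). { intro s. destruct (rho s); simpl. lra. }
destruct (compactness_value_1d 0 (2 * L) (fun s => mkposreal _ (Hdp s))) as [d Hd].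
exists d. split. apply cond_pos. intros x t Hx Ht.
set (x' := Rmax 0 (Rmin x (2 * L))).
assert (Hx' : 0 <= x' <= 2 * L).
{ unfold x'. split. apply Rmax_l. apply Rmax_lub. lra. apply Rmin_r. }
assert (Hd0 := cond_pos d).
assert (Hxx : Rabs (x - x') < d).
{ unfold x'. destruct (Rle_lt_dec x (2*L)) as [h1|h1].
  - rewrite Rmin_left by lra. destruct (Rle_lt_dec 0 x).
    + rewrite Rmax_right by lra. apply Rabs_def1; lra.
    + rewrite Rmax_left by lra. apply Rabs_def1; lra.
  - rewrite Rmin_right by lra. rewrite Rmax_right by lra. apply Rabs_def1; lra. }
destruct (Rlt_dec 0 (f x t)) as [Hok|Hno]; auto. exfalso.
apply (Hd x' Hx'). intros [s [Hs [Hs1 Hs2]]]. simpl in Hs1, Hs2.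
apply Hno. apply (Hrho s Hs).
- replace (x - s) with ((x - x') + (x' - s)) by ring.
  eapply Rle_lt_trans. apply Rabs_triang. lra.
- lra.
Qed.

Lemma comp_R f g x df dg : is_derive f (g x) df -> is_derive g x dg ->
  is_derive (fun y => f (g y)) x (dg * df).
Proof. intros H1 H2. exact (is_derive_comp f g x df dg H1 H2). Qed.

Lemma is_derive_cos x : is_derive cos x (- sin x).
Proof. apply is_derive_Reals, derivable_pt_lim_cos. Qed.
Lemma is_derive_sin x : is_derive sin x (cos x).
Proof. apply is_derive_Reals, derivable_pt_lim_sin. Qed.

Section Curve.
Variables x0 L : R.
Hypothesis Hx0 : 0 < x0.
Hypothesis HL : 3 * x0 < L.

Let sg := sigma0 x0 L.
Let k := kk x0 L.

Lemma sg_bounds : 0 < sg < PI / 2.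
Proof.
unfold sg, sigma0. set (r := x0 / (L + x0)).
assert (Hr : 0 < r < 1/4). { unfold r. split. apply Rdiv_lt_0_compat; lra.
  apply Rmult_lt_reg_r with (4 * (L + x0)). lra. field_simplify; lra. }
assert (Hs := sqrt_lt_R0 r (proj1 Hr)). assert (Hss := sqrt_sqrt r (Rlt_le _ _ (proj1 Hr))).
assert (Hq : sqrt r < 1/2) by nra.
assert (Hpi := PI_RGT_0). split; nra.
Qed.

Lemma sin_sg : 0 < sin sg < 1.
Proof.
destruct sg_bounds. split. apply sin_gt_0; lra.
rewrite <- sin_PI2. apply sin_increasing_1; lra.
Qed.

Lemma k_gt : L < k.
Proof.
unfold k, kk. fold sg. destruct sin_sg.
assert (E : L / sin sg * sin sg = L) by (field; lra).
assert (0 < L / sin sg). apply Rdiv_lt_0_compat; lra. nra.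
Qed.

Definition Dm s := L - k < s < L + k.

Lemma z_range s : Dm s -> -1 < (s - L) / k < 1.
Proof.
unfold Dm. intro H. assert (Hk := k_gt). split.
assert (E : (s - L) / k * k = s - L) by (field; lra). nra.
assert (E : (s - L) / k * k = s - L) by (field; lra). nra.
Qed.

Lemma is_derive_asin z : -1 < z < 1 -> is_derive asin z (1 / sqrt (1 - z²)).
Proof.
intro H. apply is_derive_Reals. apply (derive_pt_eq_1 _ _ _ (derivable_pt_asin z H)).
apply derive_pt_asin.
Qed.

Definition th s := PI / sg * asin ((s - L) / k) + PI.
Definition hh s := PI / (sg * sqrt (k ^ 2 - (s - L) ^ 2)).

Lemma sqrt_fact s : Dm s -> sqrt (k ^ 2 - (s - L) ^ 2) = k * sqrt (1 - ((s - L) / k)²).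
Proof.
intro H. assert (Hk := k_gt). 
replace (k ^ 2 - (s - L) ^ 2) with (k² * (1 - ((s - L) / k)²)).
rewrite sqrt_mult. rewrite sqrt_Rsqr by lra. auto.
apply Rle_0_sqr. destruct (z_range s H). unfold Rsqr. nra.
unfold Rsqr. field. lra.
Qed.

Lemma is_derive_th s : Dm s -> is_derive th s (hh s).
Proof.
intro H. assert (Hk := k_gt). destruct (z_range s H) as [z1 z2].
assert (Hq : 0 < 1 - ((s - L) / k)²). { unfold Rsqr. nra. }
assert (Hsq := sqrt_lt_R0 _ Hq). destruct sg_bounds.
assert (Hin : is_derive (fun t => (t - L) / k) s (/ k)).
{ auto_derive. auto. field. lra. }
assert (Ha : is_derive (fun t => asin ((t - L) / k)) s (/ k * (1 / sqrt (1 - ((s - L) / k)²)))).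
{ apply (is_derive_comp asin (fun t => (t - L) / k)). apply is_derive_asin; auto. auto. }
unfold th.
assert (E : hh s = PI / sg * (/ k * (1 / sqrt (1 - ((s - L) / k)²))) + 0).
{ unfold hh. rewrite sqrt_fact by auto. field. repeat split; lra. }
rewrite E. apply (is_derive_plus (fun t => PI / sg * asin ((t - L) / k)) (fun _ => PI)).
apply is_derive_scal. exact Ha. exact (is_derive_const PI s).
Qed.

Lemma is_derive_aa s : Dm s -> is_derive (aa x0 L) s (/ k * (1 / sqrt (1 - ((s - L) / k)²))).
Proof.
intro H. assert (Hk := k_gt). destruct (z_range s H) as [z1 z2].
assert (Hin : is_derive (fun t => (t - L) / k) s (/ k)).
{ auto_derive. auto. field. lra. }
apply (is_derive_comp asin (fun t => (t - L) / k)). apply is_derive_asin; auto. auto.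
Qed.

Lemma gx_deriv s : Dm s -> is_derive (gam_x x0 L) s (cos (th s)).
Proof.
intro H. assert (Hk := k_gt). destruct (z_range s H) as [z1 z2].
assert (Hq : 0 < 1 - ((s - L) / k)²). { unfold Rsqr. nra. }
assert (Hsq := sqrt_lt_R0 _ Hq). destruct sg_bounds.
assert (Ha := is_derive_aa s H).
unfold gam_x. cbv zeta. fold sg k.
auto_derive. split; [apply (ex_intro _ _ Ha)|]. split; [apply (ex_intro _ _ Ha)|auto].
replace (Derive (fun x : R => aa x0 L x) s) with (/ k * (1 / sqrt (1 - ((s - L) / k)²)))
  by (symmetry; apply is_derive_unique; exact Ha).
unfold th. fold (aa x0 L s). set (A := aa x0 L s).
replace ((PI + sg) / sg * A) with (PI / sg * A + A) by (field; lra).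
replace ((PI - sg) / sg * A) with (PI / sg * A - A) by (field; lra).
rewrite cos_plus, cos_minus, cos_plus, cos_PI, sin_PI.
assert (HcA : cos A = sqrt (1 - ((s - L) / k)²)).
{ unfold A, aa. fold k. apply cos_asin. lra. }
change (asin ((s - L) / k)) with A. rewrite HcA. assert (Hpi := PI_RGT_0). field. repeat split; lra.
Qed.

Lemma gy_deriv s : Dm s -> is_derive (gam_y x0 L) s (sin (th s)).
Proof.
intro H. assert (Hk := k_gt). destruct (z_range s H) as [z1 z2].
assert (Hq : 0 < 1 - ((s - L) / k)²). { unfold Rsqr. nra. }
assert (Hsq := sqrt_lt_R0 _ Hq). destruct sg_bounds.
assert (Ha := is_derive_aa s H).
unfold gam_y. cbv zeta. fold sg k.
auto_derive. split; [apply (ex_intro _ _ Ha)|]. split; [apply (ex_intro _ _ Ha)|auto].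
replace (Derive (fun x : R => aa x0 L x) s) with (/ k * (1 / sqrt (1 - ((s - L) / k)²)))
  by (symmetry; apply is_derive_unique; exact Ha).
unfold th. fold (aa x0 L s). set (A := aa x0 L s).
replace ((PI + sg) / sg * A) with (PI / sg * A + A) by (field; lra).
replace ((PI - sg) / sg * A) with (PI / sg * A - A) by (field; lra).
rewrite sin_plus, sin_minus, sin_plus, cos_PI, sin_PI.
assert (HcA : cos A = sqrt (1 - ((s - L) / k)²)).
{ unfold A, aa. fold k. apply cos_asin. lra. }
change (asin ((s - L) / k)) with A. rewrite HcA. assert (Hpi := PI_RGT_0). field. repeat split; lra.
Qed.

Definition alp := sg ^ 2 / PI ^ 2.

Lemma Dm_P s : Dm s -> 0 < k ^ 2 - (s - L) ^ 2.
Proof. unfold Dm; intros; assert (Hk := k_gt); nra. Qed.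

Lemma hh_pos s : Dm s -> 0 < hh s.
Proof.
intro H. unfold hh. destruct sg_bounds. assert (Hpi := PI_RGT_0).
apply Rdiv_lt_0_compat; auto. apply Rmult_lt_0_compat; auto. apply sqrt_lt_R0, Dm_P; auto.
Qed.

Lemma hh_deriv s : Dm s -> is_derive hh s (alp * (s - L) * hh s ^ 3).
Proof.
intro H. assert (HP := Dm_P s H). destruct sg_bounds. assert (Hpi := PI_RGT_0).
assert (Hr := sqrt_sqrt _ (Rlt_le _ _ HP)). assert (Hr0 := sqrt_lt_R0 _ HP).
unfold hh. auto_derive. repeat split; auto. apply Rgt_not_eq, Rmult_lt_0_compat; auto.
unfold alp. replace (k * (k * 1) + - ((s + - L) * ((s + - L) * 1))) with (k ^ 2 - (s - L) ^ 2) by ring. field.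
repeat split; lra.
Qed.

Lemma Dm_open : forall s, Dm s -> exists e, 0 < e /\ forall u, Rabs (u - s) < e -> Dm u.
Proof.
unfold Dm. intros s Hs. exists (Rmin (s - (L - k)) (L + k - s)). split.
apply Rmin_glb_lt; lra. intros u Hu. apply Rabs_def2 in Hu.
assert (Rmin (s - (L - k)) (L + k - s) <= s - (L - k)) by apply Rmin_l.
assert (Rmin (s - (L - k)) (L + k - s) <= L + k - s) by apply Rmin_r. lra.
Qed.

Lemma Dm_loc s (P : R -> Prop) : Dm s -> (forall u, Dm u -> P u) -> locally s P.
Proof.
intros Hs HP. destruct (Dm_open s Hs) as [e [He H]]. exists (mkposreal e He).
intros u Hu. apply HP, H. exact Hu.
Qed.

Lemma Dm_int s : -(k - L) < s < 2 * L + (k - L) -> Dm s.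
Proof. unfold Dm; lra. Qed.

Lemma Dx s : Dm s -> Derive (gam_x x0 L) s = cos (th s).
Proof. intro; apply is_derive_unique, gx_deriv; auto. Qed.
Lemma Dy s : Dm s -> Derive (gam_y x0 L) s = sin (th s).
Proof. intro; apply is_derive_unique, gy_deriv; auto. Qed.

Lemma DDx s : Dm s -> Derive (Derive (gam_x x0 L)) s = - sin (th s) * hh s.
Proof.
intro H. rewrite (Derive_ext_loc _ (fun u => cos (th u))).
apply is_derive_unique. replace (- sin (th s) * hh s) with (hh s * - sin (th s)) by ring.
apply (comp_R cos th). apply is_derive_cos. apply is_derive_th; auto.
apply Dm_loc; auto. intros; apply Dx; auto.
Qed.

Lemma DDy s : Dm s -> Derive (Derive (gam_y x0 L)) s = cos (th s) * hh s.
Proof.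
intro H. rewrite (Derive_ext_loc _ (fun u => sin (th u))).
apply is_derive_unique. rewrite Rmult_comm.
apply (comp_R sin th). apply is_derive_sin. apply is_derive_th; auto.
apply Dm_loc; auto. intros; apply Dy; auto.
Qed.

Lemma speed_g s : Dm s -> speed (gam_x x0 L) (gam_y x0 L) s = 1.
Proof.
intro H. unfold speed. rewrite Dx, Dy by auto.
replace (cos (th s) ^ 2 + sin (th s) ^ 2) with 1. apply sqrt_1.
rewrite <- (sin2_cos2 (th s)). unfold Rsqr. ring.
Qed.

Lemma curv_g s : Dm s -> curv (gam_x x0 L) (gam_y x0 L) s = hh s.
Proof.
intro H. unfold curv. rewrite speed_g, Dx, Dy, DDx, DDy by auto.
transitivity (hh s * (sin (th s) ^ 2 + cos (th s) ^ 2)). field.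
assert (E := sin2_cos2 (th s)). unfold Rsqr in E.
replace (sin (th s) ^ 2 + cos (th s) ^ 2) with 1 by (rewrite <- E; ring). ring.
Qed.

Lemma nx_g s : Dm s -> normal_x (gam_x x0 L) (gam_y x0 L) s = sin (th s).
Proof. intro H. unfold normal_x. rewrite speed_g, Dy by auto. field. Qed.
Lemma ny_g s : Dm s -> normal_y (gam_x x0 L) (gam_y x0 L) s = - cos (th s).
Proof. intro H. unfold normal_y. rewrite speed_g, Dx by auto. field. Qed.

Lemma th_0 : th 0 = 0.
Proof.
unfold th. destruct sin_sg, sg_bounds. assert (Hpi := PI_RGT_0).
replace ((0 - L) / k) with (sin (- sg)).
rewrite asin_sin by lra. field. lra.
rewrite sin_neg. unfold k, kk. fold sg. field. lra.
Qed.

Lemma th_2L : th (2 * L) = 2 * PI.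
Proof.
unfold th. destruct sin_sg, sg_bounds. assert (Hpi := PI_RGT_0).
replace ((2 * L - L) / k) with (sin sg).
rewrite asin_sin by lra. field. lra.
unfold k, kk. fold sg. field. lra.
Qed.
End Curve.

Lemma exd_of (f : R -> R) (x l : R) : is_derive f x l -> ex_derive f x.
Proof. intro H; exists l; exact H. Qed.

Ltac rwD H := match type of H with is_derive ?f ?x ?l =>
  replace (Derive (fun y : R => f y) x) with l by (symmetry; apply is_derive_unique; exact H) end.

Lemma G1 (ax ay bx by' ax1 ay1 bx1 by1 : R -> R) t :
  is_derive ax t (ax1 t) -> is_derive ay t (ay1 t) ->
  is_derive bx t (bx1 t) -> is_derive by' t (by1 t) ->
  ax t * by' t - ay t * bx t <> 0 ->
  is_derive (fun t => (ax t ^ 2 + ay t ^ 2) ^ 2 / (ax t * by' t - ay t * bx t)) t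
   ((2 * (ax t ^ 2 + ay t ^ 2) * (2 * (ax t * ax1 t + ay t * ay1 t)) * (ax t * by' t - ay t * bx t)
     - (ax t ^ 2 + ay t ^ 2) ^ 2 * (ax1 t * by' t + ax t * by1 t - ay1 t * bx t - ay t * bx1 t))
    / (ax t * by' t - ay t * bx t) ^ 2).
Proof.
intros Hax Hay Hbx Hby Hc.
auto_derive.
repeat split; eauto using exd_of.
rwD Hax. rwD Hay. rwD Hbx. rwD Hby.
field. auto.
Qed.

Definition G2f (ax ay bx by' ax1 ay1 bx1 by1 ax2 ay2 bx2 by2 : R) : R :=
  let u := ax ^ 2 + ay ^ 2 in
  let u1 := 2 * (ax * ax1 + ay * ay1) in
  let u2 := 2 * (ax1 ^ 2 + ay1 ^ 2 + ax * ax2 + ay * ay2) in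
  let c := ax * by' - ay * bx in
  let c1 := ax1 * by' + ax * by1 - ay1 * bx - ay * bx1 in
  let c2 := ax2 * by' + 2 * ax1 * by1 + ax * by2 - (ay2 * bx + 2 * ay1 * bx1 + ay * bx2) in
  2 * u1 ^ 2 / c + 2 * u * u2 / c - 4 * u * u1 * c1 / c ^ 2 - u ^ 2 * c2 / c ^ 2
  + 2 * u ^ 2 * c1 ^ 2 / c ^ 3.

Lemma G2 (ax ay bx by' ax1 ay1 bx1 by1 : R -> R) ax2 ay2 bx2 by2 :
  locally 0 (fun t => is_derive ax t (ax1 t) /\ is_derive ay t (ay1 t) /\
    is_derive bx t (bx1 t) /\ is_derive by' t (by1 t) /\ ax t * by' t - ay t * bx t <> 0) ->
  is_derive ax1 0 ax2 -> is_derive ay1 0 ay2 -> is_derive bx1 0 bx2 -> is_derive by1 0 by2 ->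
  is_derive (fun t => Derive (fun t => (ax t ^ 2 + ay t ^ 2) ^ 2 / (ax t * by' t - ay t * bx t)) t) 0
    (G2f (ax 0) (ay 0) (bx 0) (by' 0) (ax1 0) (ay1 0) (bx1 0) (by1 0) ax2 ay2 bx2 by2).
Proof.
intros Hl H1 H2 H3 H4.
assert (H0 := locally_singleton _ _ Hl). destruct H0 as [Hax [Hay [Hbx [Hby Hc]]]].
eapply is_derive_ext_loc.
{ eapply filter_imp; [|exact Hl]. intros t [A [B [C [D E]]]].
  symmetry. apply is_derive_unique. apply (G1 ax ay bx by' ax1 ay1 bx1 by1); auto. }
auto_derive.
repeat split; eauto using exd_of.
rwD Hax. rwD Hay. rwD Hbx. rwD Hby. rwD H1. rwD H2. rwD H3. rwD H4.
unfold G2f. cbv zeta. field. auto.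
Qed.

Lemma deriv_q (f : R -> R) a l : is_derive f a l -> forall eps, 0 < eps ->
  exists d, 0 < d /\ forall h, h <> 0 -> Rabs h < d -> Rabs ((f (a + h) - f a) / h - l) < eps.
Proof.
intros H eps He. apply is_derive_Reals in H. destruct (H eps He) as [d Hd].
exists d. split. apply cond_pos. exact Hd.
Qed.

Lemma is_rderiv_of (f : R -> R) (t l : R) : is_derive f t l -> is_rderiv f t l.
Proof.
intro H. unfold is_rderiv. apply filterlim_locally. intro eps.
destruct (deriv_q f t l H eps (cond_pos eps)) as [d [Hd Hq]].
exists (mkposreal d Hd). intros h Hh Hpos.
unfold ball; simpl; unfold AbsRing_ball, abs, minus, plus, opp; simpl.
apply Hq. lra. unfold ball in Hh; simpl in Hh; unfold AbsRing_ball, abs, minus, plus, opp in Hh; simpl in Hh.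
rewrite Ropp_0, Rplus_0_r in Hh. exact Hh.
Qed.

Lemma rdiff_agree (f g : R -> R) (a l1 l2 d : R) : is_derive f a l1 -> is_derive g a l2 -> 0 < d ->
  (forall t, a <= t < a + d -> f t = g t) -> l1 = l2.
Proof.
intros Hf Hg Hd Hfg.
destruct (Req_dec l1 l2) as [E|NE]; auto. exfalso.
set (eps := Rabs (l1 - l2) / 2).
assert (He : 0 < eps). { unfold eps. apply Rdiv_lt_0_compat; [apply Rabs_pos_lt|]; lra. }
destruct (deriv_q f a l1 Hf eps He) as [d1 [Hd1 H1]].
destruct (deriv_q g a l2 Hg eps He) as [d2 [Hd2 H2]].
set (h := Rmin d (Rmin d1 d2) / 2).
assert (Hm : 0 < Rmin d (Rmin d1 d2)) by (repeat apply Rmin_glb_lt; auto).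
assert (Hh : 0 < h) by (unfold h; lra).
assert (Hh1 : h < d) by (unfold h; assert (Rmin d (Rmin d1 d2) <= d) by apply Rmin_l; lra).
assert (Hh2 : h < d1) by (unfold h; assert (Rmin d (Rmin d1 d2) <= Rmin d1 d2) by apply Rmin_r;
  assert (Rmin d1 d2 <= d1) by apply Rmin_l; lra).
assert (Hh3 : h < d2) by (unfold h; assert (Rmin d (Rmin d1 d2) <= Rmin d1 d2) by apply Rmin_r;
  assert (Rmin d1 d2 <= d2) by apply Rmin_r; lra).
assert (A1 := H1 h ltac:(lra) ltac:(rewrite Rabs_pos_eq; lra)).
assert (A2 := H2 h ltac:(lra) ltac:(rewrite Rabs_pos_eq; lra)).
rewrite (Hfg (a + h)), (Hfg a) in A1 by lra.
assert (Rabs (l1 - l2) <= Rabs ((g (a + h) - g a) / h - l1) + Rabs ((g (a + h) - g a) / h - l2)).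
{ replace (l1 - l2) with (- ((g (a + h) - g a) / h - l1) + ((g (a + h) - g a) / h - l2)) by ring.
  eapply Rle_trans. apply Rabs_triang. rewrite Rabs_Ropp. lra. }
unfold eps in *. lra.
Qed.

Lemma ldiff_agree (f g : R -> R) (a l1 l2 d : R) : is_derive f a l1 -> is_derive g a l2 -> 0 < d ->
  (forall t, a - d < t <= a -> f t = g t) -> l1 = l2.
Proof.
intros Hf Hg Hd Hfg.
assert (Hm : is_derive (fun t : R => - t) (- a) (-1)) by (auto_derive; [auto|ring]).
assert (Hf' : is_derive (fun t => f (- t)) (- a) (-1 * l1)).
{ refine (is_derive_comp f (fun t => - t) (- a) l1 (-1) _ Hm). rewrite Ropp_involutive. exact Hf. }
assert (Hg' : is_derive (fun t => g (- t)) (- a) (-1 * l2)).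
{ refine (is_derive_comp g (fun t => - t) (- a) l2 (-1) _ Hm). rewrite Ropp_involutive. exact Hg. }
assert (E := rdiff_agree _ _ _ _ _ d Hf' Hg' Hd).
assert (-1 * l1 = -1 * l2). apply E. intros t Ht. apply Hfg. lra. lra.
Qed.

Lemma rsign (f : R -> R) (a l d : R) : is_derive f a l -> 0 < d ->
  (forall t, a < t < a + d -> f a <= f t) -> 0 <= l.
Proof.
intros Hf Hd H. destruct (Rle_lt_dec 0 l) as [ok|Hl]; auto. exfalso.
destruct (deriv_q f a l Hf (- l / 2) ltac:(lra)) as [d1 [Hd1 H1]].
set (h := Rmin d d1 / 2).
assert (0 < Rmin d d1) by (apply Rmin_glb_lt; auto).
assert (Rmin d d1 <= d) by apply Rmin_l. assert (Rmin d d1 <= d1) by apply Rmin_r.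
assert (Hh : 0 < h) by (unfold h; lra).
assert (A := H1 h ltac:(lra) ltac:(rewrite Rabs_pos_eq; unfold h; lra)).
assert (B := H (a + h) ltac:(unfold h; lra)).
assert (0 <= (f (a + h) - f a) / h). { apply Rdiv_le_0_compat; lra. }
apply Rabs_def2 in A. lra.
Qed.

Lemma lsign (f : R -> R) (a l d : R) : is_derive f a l -> 0 < d ->
  (forall t, a - d < t < a -> f a <= f t) -> l <= 0.
Proof.
intros Hf Hd H. destruct (Rle_lt_dec l 0) as [ok|Hl]; auto. exfalso.
destruct (deriv_q f a l Hf (l / 2) ltac:(lra)) as [d1 [Hd1 H1]].
set (h := - (Rmin d d1 / 2)).
assert (0 < Rmin d d1) by (apply Rmin_glb_lt; auto).
assert (Rmin d d1 <= d) by apply Rmin_l. assert (Rmin d d1 <= d1) by apply Rmin_r.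
assert (Hh : h < 0) by (unfold h; lra).
assert (A := H1 h ltac:(lra) ltac:(rewrite Rabs_left; unfold h; lra)).
assert (B := H (a + h) ltac:(unfold h; lra)).
assert ((f (a + h) - f a) / h <= 0).
{ unfold Rdiv. replace ((f (a + h) - f a) * / h) with (- ((f (a + h) - f a) * / (- h))).
  assert (0 <= (f (a + h) - f a) * / (- h)). apply Rmult_le_pos. lra.
  apply Rlt_le, Rinv_0_lt_compat. lra. lra. field. lra. }
apply Rabs_def2 in A. lra.
Qed.

Lemma deriv_min (f : R -> R) (a l d : R) : is_derive f a l -> 0 < d ->
  (forall t, a - d < t < a + d -> f a <= f t) -> l = 0.
Proof.
intros Hf Hd H. assert (0 <= l). apply (rsign f a l d); auto. intros; apply H; lra.
assert (l <= 0). apply (lsign f a l d); auto. intros; apply H; lra. lra.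
Qed.

Lemma deriv_max (f : R -> R) (a l d : R) : is_derive f a l -> 0 < d ->
  (forall t, a - d < t < a + d -> f t <= f a) -> l = 0.
Proof.
intros Hf Hd H. assert (Hm : is_derive (fun t => - f t) a (- l)).
{ apply (is_derive_opp f). exact Hf. }
assert (- l = 0). apply (deriv_min (fun t => - f t) a (- l) d Hm Hd). intros; assert (f t <= f a) by (apply H; auto); lra.
lra.
Qed.

Lemma second_test (h h1 : R -> R) (l d : R) : 0 < d ->
  (forall t, Rabs t < d -> is_derive h t (h1 t)) -> is_derive h1 0 l -> h1 0 = 0 ->
  (forall t, Rabs t < d -> h 0 <= h t) -> 0 <= l.
Proof.
intros Hd Hh Hh1 H0 Hmin. destruct (Rle_lt_dec 0 l) as [ok|Hl]; auto. exfalso.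
destruct (deriv_q h1 0 l Hh1 (- l / 2) ltac:(lra)) as [d1 [Hd1 H1]].
set (t := Rmin d d1 / 2).
assert (0 < Rmin d d1) by (apply Rmin_glb_lt; auto).
assert (Rmin d d1 <= d) by apply Rmin_l. assert (Rmin d d1 <= d1) by apply Rmin_r.
assert (Ht : 0 < t) by (unfold t; lra).
destruct (MVT_cor2 h h1 0 t Ht) as [c [Hc1 Hc2]].
{ intros c Hc. apply is_derive_Reals. apply Hh. rewrite Rabs_pos_eq by lra. unfold t in *; lra. }
assert (A := H1 c ltac:(lra) ltac:(rewrite Rabs_pos_eq; unfold t in *; lra)).
rewrite Rplus_0_l, H0, Rminus_0_r in A. apply Rabs_def2 in A.
assert (Hneg : h1 c < 0).
{ destruct A as [A1 A2]. assert (h1 c / c < 0) by lra.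
  assert (h1 c = h1 c / c * c) by (field; lra). nra. }
assert (B := Hmin t ltac:(rewrite Rabs_pos_eq; unfold t in *; lra)).
nra.
Qed.

Lemma second_test_max (h h1 : R -> R) (l d : R) : 0 < d ->
  (forall t, Rabs t < d -> is_derive h t (h1 t)) -> is_derive h1 0 l -> h1 0 = 0 ->
  (forall t, Rabs t < d -> h t <= h 0) -> l <= 0.
Proof.
intros Hd Hh Hh1 H0 Hmax.
assert (0 <= - l).
{ apply (second_test (fun t => - h t) (fun t => - h1 t) (- l) d Hd).
  - intros t Ht. apply (is_derive_opp h). auto.
  - apply (is_derive_opp h1). auto.
  - rewrite H0; ring.
  - intros t Ht. assert (h t <= h 0) by auto. lra. }
lra.
Qed.

Lemma rot_x (A B th : R -> R) s A1 B1 h : is_derive A s A1 -> is_derive B s B1 -> is_derive th s h ->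
  is_derive (fun u => A u * sin (th u) + B u * cos (th u)) s
    ((A1 - h * B s) * sin (th s) + (h * A s + B1) * cos (th s)).
Proof.
intros HA HB Ht. auto_derive. repeat split; eauto using exd_of.
rwD HA. rwD HB. rwD Ht. ring.
Qed.

Lemma rot_y (A B th : R -> R) s A1 B1 h : is_derive A s A1 -> is_derive B s B1 -> is_derive th s h ->
  is_derive (fun u => - A u * cos (th u) + B u * sin (th u)) s
    (- (A1 - h * B s) * cos (th s) + (h * A s + B1) * sin (th s)).
Proof.
intros HA HB Ht. auto_derive. repeat split; eauto using exd_of.
rwD HA. rwD HB. rwD Ht. ring.
Qed.

Definition G2core u u1 u2 c c1 c2 :=
  2 * u1 ^ 2 / c + 2 * u * u2 / c - 4 * u * u1 * c1 / c ^ 2 - u ^ 2 * c2 / c ^ 2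
  + 2 * u ^ 2 * c1 ^ 2 / c ^ 3.

Lemma key1 c sn h a1 b1 a2 b2 c1 d1 c2 d2 : c ^ 2 + sn ^ 2 = 1 ->
  G2f c sn (- sn * h) (c * h) (a1 * sn + b1 * c) (- a1 * c + b1 * sn)
      (a2 * sn + b2 * c) (- a2 * c + b2 * sn) (c1 * sn + d1 * c) (- c1 * c + d1 * sn)
      (c2 * sn + d2 * c) (- c2 * c + d2 * sn)
  = G2core 1 (2 * b1) (2 * (a1 ^ 2 + b1 ^ 2 + d1)) h (h * b1 - a2)
      (h * d1 + 2 * (a1 * b2 - b1 * a2) - c2).
Proof.
intro E.
match goal with |- G2f ?ax ?ay ?bx ?by' ?ax1 ?ay1 ?bx1 ?by1 ?ax2 ?ay2 ?bx2 ?by2 = _ =>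
 change (G2f ax ay bx by' ax1 ay1 bx1 by1 ax2 ay2 bx2 by2) with
  (G2core (ax ^ 2 + ay ^ 2) (2 * (ax * ax1 + ay * ay1)) (2 * (ax1 ^ 2 + ay1 ^ 2 + ax * ax2 + ay * ay2))
    (ax * by' - ay * bx) (ax1 * by' + ax * by1 - ay1 * bx - ay * bx1)
    (ax2 * by' + 2 * ax1 * by1 + ax * by2 - (ay2 * bx + 2 * ay1 * bx1 + ay * bx2))) end.
set (w := c ^ 2 + sn ^ 2) in *.
f_equal.
- exact E.
- transitivity (2 * b1 * w). unfold w; ring. rewrite E; ring.
- transitivity (2 * (a1 ^ 2 + b1 ^ 2 + d1) * w). unfold w; ring. rewrite E; ring.
- transitivity (h * w). unfold w; ring. rewrite E; ring.
- transitivity ((h * b1 - a2) * w). unfold w; ring. rewrite E; ring.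
- transitivity ((h * d1 + 2 * (a1 * b2 - b1 * a2) - c2) * w). unfold w; ring. rewrite E; ring.
Qed.

Definition Qfun (al L0 : R) (f f1 p p1 ps ps1 q hh : R -> R) (u : R) : R :=
  ps1 u / hh u ^ 2 + q u / hh u + 2 * al * (u - L0) * ps u + 2 * f u * f1 u / hh u
  + 2 * p u * p1 u / hh u + 2 * al * (u - L0) * hh u * p u ^ 2 - 2 * f u * p u
  - 2 * f1 u * p1 u / hh u ^ 2 - 4 * al * (u - L0) * p u * f1 u + 4 * al * f u * p u.

Definition Ev (al h f f1 f2 p p1 ps : R) :=
  2 * h * f ^ 2 - 2 * f1 ^ 2 / h + 2 * f2 ^ 2 / h ^ 3 + (2 - 2 * al) * (ps + h * p ^ 2 + 2 * f * p1).

Definition Kv (al L0 s h f f1 f2 p p1 p2 ps ps1 ps2 q q1 : R) :=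
  let h1 := al * (s - L0) * h ^ 3 in
  let a1 := f1 - h * p in let b1 := h * f + p1 in
  let a2 := (f2 - (h1 * p + h * p1)) - h * b1 in
  let b2 := h * a1 + (h1 * f + h * f1 + p2) in
  let c1 := ps1 - h * q in let d1 := h * ps + q1 in
  let c2 := (ps2 - (h1 * q + h * q1)) - h * d1 in
  G2core 1 (2 * b1) (2 * (a1 ^ 2 + b1 ^ 2 + d1)) h (h * b1 - a2) (h * d1 + 2 * (a1 * b2 - b1 * a2) - c2).

Lemma Q_deriv (al L0 : R) (f f1 p p1 ps ps1 q hh : R -> R) s f2 p2 ps2 q1 :
  is_derive f s (f1 s) -> is_derive f1 s f2 -> is_derive p s (p1 s) -> is_derive p1 s p2 ->
  is_derive ps s (ps1 s) -> is_derive ps1 s ps2 -> is_derive q s q1 ->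
  is_derive hh s (al * (s - L0) * hh s ^ 3) -> hh s <> 0 ->
  is_derive (Qfun al L0 f f1 p p1 ps ps1 q hh) s
    (Kv al L0 s (hh s) (f s) (f1 s) f2 (p s) (p1 s) p2 (ps s) (ps1 s) ps2 (q s) q1
     - Ev al (hh s) (f s) (f1 s) f2 (p s) (p1 s) (ps s)).
Proof.
intros Hf Hf1 Hp Hp1 Hps Hps1 Hq Hh Hh0. unfold Qfun.
auto_derive. repeat split; eauto using exd_of.
rwD Hf. rwD Hf1. rwD Hp. rwD Hp1. rwD Hps. rwD Hps1. rwD Hq. rwD Hh.
unfold Kv, Ev, G2core. cbv zeta. field. auto.
Qed.

Lemma sw1 U f s t : openR U -> Sm U f -> U s t -> d_t (d_s f) s t = d_s (d_t f) s t.
Proof. intros. symmetry. apply Sm_schwarz with U; auto. Qed.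

Lemma sw2 U f s t : openR U -> Sm U f -> U s t -> d_t (d_s (d_s f)) s t = d_s (d_s (d_t f)) s t.
Proof.
intros HU Hf Hst. rewrite (sw1 U (d_s f)); auto using Sm_ds.
unfold d_s at 1. unfold d_s at 3. apply Derive_ext_loc.
apply (openR_loc_s U _ s t HU Hst). intros s' Hs'. apply sw1 with U; auto.
Qed.

Lemma sw3 U f s t : openR U -> Sm U f -> U s t -> d_t (d_t (d_s f)) s t = d_s (d_t (d_t f)) s t.
Proof.
intros HU Hf Hst. rewrite <- (sw1 U (d_t f)); auto using Sm_dt.
unfold d_t at 1. unfold d_t at 2. apply Derive_ext_loc.
apply (openR_loc_t U _ s t HU Hst). intros t' Ht'. apply sw1 with U; auto.
Qed.

Lemma sw4 U f s t : openR U -> Sm U f -> U s t ->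
  d_t (d_t (d_s (d_s f))) s t = d_s (d_s (d_t (d_t f))) s t.
Proof.
intros HU Hf Hst. rewrite <- (sw2 U (d_t f)); auto using Sm_dt.
unfold d_t at 1. unfold d_t at 2. apply Derive_ext_loc.
apply (openR_loc_t U _ s t HU Hst). intros t' Ht'. apply sw2 with U; auto.
Qed.

Lemma contR_plus (f g : R -> R) x : continuous f x -> continuous g x -> continuous (fun u => f u + g u) x.
Proof. intros. apply (continuous_plus f g); auto. Qed.
Lemma contR_mult (f g : R -> R) x : continuous f x -> continuous g x -> continuous (fun u => f u * g u) x.
Proof. intros. apply (continuous_mult f g); auto. Qed.
Lemma contR_opp (f : R -> R) x : continuous f x -> continuous (fun u => - f u) x.
Proof. intros. apply (continuous_opp f); auto. Qed.
Lemma contR_minus (f g : R -> R) x : continuous f x -> continuous g x -> continuous (fun u => f u - g u) x.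
Proof. intros. apply contR_plus; auto. apply contR_opp; auto. Qed.
Lemma contR_inv (f : R -> R) x : continuous f x -> f x <> 0 -> continuous (fun u => / f u) x.
Proof. intros. apply (continuous_comp f Rinv); auto. apply continuous_Rinv; auto. Qed.
Lemma contR_div (f g : R -> R) x : continuous f x -> continuous g x -> g x <> 0 ->
  continuous (fun u => f u / g u) x.
Proof. intros. apply contR_mult; auto. apply contR_inv; auto. Qed.
Lemma contR_pow (f : R -> R) n x : continuous f x -> continuous (fun u => f u ^ n) x.
Proof.
intros H. induction n as [|n IH]. apply continuous_const.
simpl. apply contR_mult; auto.
Qed.
Lemma contR_const (c x : R) : continuous (fun _ : R => c) x.
Proof. apply continuous_const. Qed.
Lemma contR_id x : continuous (fun u : R => u) x.
Proof. apply continuous_id. Qed.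

Ltac cont1 := match goal with
| |- continuous (fun u => _ + _) _ => apply contR_plus
| |- continuous (fun u => _ - _) _ => apply contR_minus
| |- continuous (fun u => _ * _) _ => apply contR_mult
| |- continuous (fun u => _ / _) _ => apply contR_div
| |- continuous (fun u => _ ^ _) _ => apply contR_pow
| |- continuous (fun u => - _) _ => apply contR_opp
| |- continuous (fun u => u) _ => apply contR_id
| |- continuous (fun u => ?c) _ => apply contR_const
end.
Ltac cont := repeat cont1.

Lemma RIntR_plus (f g : R -> R) a b : ex_RInt f a b -> ex_RInt g a b ->
  RInt (fun x => f x + g x) a b = RInt f a b + RInt g a b.
Proof. intros H1 H2. exact (RInt_plus f g a b H1 H2). Qed.
Lemma RIntR_scal (f : R -> R) a b l : ex_RInt f a b -> RInt (fun x => l * f x) a b = l * RInt f a b.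
Proof. intros H. exact (RInt_scal f a b l H). Qed.
Lemma ex_RIntR_cont (f : R -> R) a b : a <= b -> (forall z, a <= z <= b -> continuous f z) -> ex_RInt f a b.
Proof.
intros Hab H. apply (@ex_RInt_continuous R_CompleteNormedModule).
intros z Hz. rewrite Rmin_left, Rmax_right in Hz by lra. auto.
Qed.
Lemma RIntR_derive (f df : R -> R) a b : a <= b ->
  (forall x, a <= x <= b -> is_derive f x (df x)) -> (forall x, a <= x <= b -> continuous df x) ->
  ex_RInt df a b /\ RInt df a b = f b - f a.
Proof.
intros Hab H1 H2.
assert (H : is_RInt df a b (minus (f b) (f a))).
{ apply (@is_RInt_derive R_CompleteNormedModule); intros x Hx; rewrite Rmin_left, Rmax_right in Hx by lra; auto. }
split. eexists; exact H. exact (@is_RInt_unique R_CompleteNormedModule df a b _ H).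
Qed.

Lemma openR_rect a b c d : openR (fun s t => a < s < b /\ c < t < d).
Proof.
intros s t [[H1 H2] [H3 H4]].
exists (Rmin (Rmin (s - a) (b - s)) (Rmin (t - c) (d - t))). split.
repeat apply Rmin_glb_lt; lra.
intros s' t' Hs Ht. apply Rabs_def2 in Hs. apply Rabs_def2 in Ht.
assert (Rmin (Rmin (s - a) (b - s)) (Rmin (t - c) (d - t)) <= Rmin (s - a) (b - s)) by apply Rmin_l.
assert (Rmin (Rmin (s - a) (b - s)) (Rmin (t - c) (d - t)) <= Rmin (t - c) (d - t)) by apply Rmin_r.
assert (Rmin (s - a) (b - s) <= s - a) by apply Rmin_l.
assert (Rmin (s - a) (b - s) <= b - s) by apply Rmin_r.
assert (Rmin (t - c) (d - t) <= t - c) by apply Rmin_l.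
assert (Rmin (t - c) (d - t) <= d - t) by apply Rmin_r.
lra.
Qed.

Section Main.
Variables x0 L : R.
Hypothesis Hx0 : 0 < x0.
Hypothesis HL : 3 * x0 < L.
Variables (Vx Vy : R -> R -> R) (phi phit psi psit : R -> R) (c0 d0 e : R).
Hypothesis Hc0 : c0 <= 0.
Hypothesis Hd0 : 0 < d0.
Hypothesis He : 0 < e.
Let U0 := fun s t => 0 - e < s < 2 * L + e /\ c0 - e < t < d0 + e.
Hypothesis HVx : forall k, C2k k U0 Vx.
Hypothesis HVy : forall k, C2k k U0 Vy.
Hypothesis Hinit : forall s, 0 <= s <= 2 * L -> Vx s 0 = gam_x x0 L s /\ Vy s 0 = gam_y x0 L s.
Hypothesis Hadm : forall t, c0 <= t <= d0 -> admissible x0 L (fun s => Vx s t) (fun s => Vy s t).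
Hypothesis Hphi : smooth_near 0 (2 * L) phi.
Hypothesis Hphit : smooth_near 0 (2 * L) phit.
Hypothesis Hpsi : smooth_near 0 (2 * L) psi.
Hypothesis Hpsit : smooth_near 0 (2 * L) psit.
Hypothesis Hvel : forall s, 0 <= s <= 2 * L ->
  vel Vx s = phi s * normal_x (gam_x x0 L) (gam_y x0 L) s + phit s * Derive (gam_x x0 L) s /\
  vel Vy s = phi s * normal_y (gam_x x0 L) (gam_y x0 L) s + phit s * Derive (gam_y x0 L) s.
Hypothesis Hacc : forall s, 0 <= s <= 2 * L ->
  acc Vx s = psi s * normal_x (gam_x x0 L) (gam_y x0 L) s + psit s * Derive (gam_x x0 L) s /\
  acc Vy s = psi s * normal_y (gam_x x0 L) (gam_y x0 L) s + psit s * Derive (gam_y x0 L) s.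

Lemma L_pos : 0 < L.
Proof. lra. Qed.

Lemma U0_open : openR U0.
Proof. apply openR_rect. Qed.

Lemma SVx : Sm U0 Vx. Proof. exact HVx. Qed.
Lemma SVy : Sm U0 Vy. Proof. exact HVy. Qed.

Definition ucomp s t := d_s Vx s t ^ 2 + d_s Vy s t ^ 2.
Definition cr s t := d_s Vx s t * d_s (d_s Vy) s t - d_s Vy s t * d_s (d_s Vx) s t.
Definition Gi s t := (d_s Vx s t ^ 2 + d_s Vy s t ^ 2) ^ 2 /
  (d_s Vx s t * d_s (d_s Vy) s t - d_s Vy s t * d_s (d_s Vx) s t).

Lemma Sm_ucomp U : openR U -> (forall s t, U s t -> U0 s t) -> Sm U ucomp.
Proof.
intros HU Hsub. apply (Sm_ext U (fun s t => d_s Vx s t * d_s Vx s t + d_s Vy s t * d_s Vy s t)); auto.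
intros; unfold ucomp; ring.
apply Sm_plus; auto; apply Sm_mult; auto; apply (Sm_sub U0); auto using Sm_ds, SVx, SVy.
Qed.

Lemma Sm_cr U : openR U -> (forall s t, U s t -> U0 s t) -> Sm U cr.
Proof.
intros HU Hsub. apply (Sm_ext U (fun s t => d_s Vx s t * d_s (d_s Vy) s t + (-1) * (d_s Vy s t * d_s (d_s Vx) s t))); auto.
intros; unfold cr; ring.
apply Sm_plus; auto; [|apply Sm_mult; auto; [apply Sm_const; auto|]]; apply Sm_mult; auto;
  apply (Sm_sub U0); auto using Sm_ds, SVx, SVy.
Qed.

Lemma adm_pos t : c0 <= t <= d0 -> forall s, 0 <= s <= 2 * L -> 0 < ucomp s t /\ 0 < cr s t.
Proof.
intros Ht s Hs. destruct (Hadm t Ht) as [_ [_ [Hu [Hcv _]]]].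
assert (Hu' := Hu s Hs). assert (Hc' := Hcv s Hs).
split. exact Hu'.
change (0 < (d_s Vx s t * d_s (d_s Vy) s t + d_s Vy s t * - d_s (d_s Vx) s t) /
   sqrt (d_s Vx s t ^ 2 + d_s Vy s t ^ 2) ^ 3) in Hc'.
change (0 < d_s Vx s t ^ 2 + d_s Vy s t ^ 2) in Hu'.
assert (Hsp : 0 < sqrt (d_s Vx s t ^ 2 + d_s Vy s t ^ 2)) by (apply sqrt_lt_R0; auto).
assert (Hsp3 := pow_lt _ 3 Hsp).
set (S3 := sqrt (d_s Vx s t ^ 2 + d_s Vy s t ^ 2) ^ 3) in *.
set (N := d_s Vx s t * d_s (d_s Vy) s t + d_s Vy s t * - d_s (d_s Vx) s t) in *.
assert (0 < N). { assert (N = N / S3 * S3) by (field; lra). nra. }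
unfold cr. unfold N in *. lra.
Qed.

Definition Rect t0 d := fun s t => 0 - d < s < 2 * L + d /\ t0 - d < t < t0 + d.

Lemma Rect_open t0 d : openR (Rect t0 d).
Proof. apply openR_rect. Qed.

Lemma Rect_sub t0 d : c0 <= t0 <= d0 -> d <= e -> forall s t, Rect t0 d s t -> U0 s t.
Proof. unfold Rect, U0. intros; lra. Qed.

Lemma tube_t0 t0 : c0 <= t0 <= d0 -> exists d, 0 < d /\ d <= e /\
  forall s t, Rect t0 d s t -> 0 < ucomp s t /\ 0 < cr s t.
Proof.
intro Ht0. assert (HL0 := L_pos).
assert (HU0 : forall s, 0 <= s <= 2 * L -> U0 s t0) by (intros; unfold U0; lra).
destruct (tube ucomp L t0 HL0) as [d1 [Hd1 H1]].
{ intros s Hs. apply (Sm_cont U0); auto. apply Sm_ucomp; auto using U0_open. }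
{ intros s Hs. apply (adm_pos t0 Ht0 s Hs). }
destruct (tube cr L t0 HL0) as [d2 [Hd2 H2]].
{ intros s Hs. apply (Sm_cont U0); auto. apply Sm_cr; auto using U0_open. }
{ intros s Hs. apply (adm_pos t0 Ht0 s Hs). }
exists (Rmin e (Rmin d1 d2)).
assert (Rmin e (Rmin d1 d2) <= e) by apply Rmin_l.
assert (Rmin e (Rmin d1 d2) <= Rmin d1 d2) by apply Rmin_r.
assert (Rmin d1 d2 <= d1) by apply Rmin_l. assert (Rmin d1 d2 <= d2) by apply Rmin_r.
split. repeat apply Rmin_glb_lt; auto. split; auto.
intros s t [Hs Ht]. split; [apply H1|apply H2]; try lra; apply Rabs_def1; lra.
Qed.

Lemma Sm_Gi t0 d : c0 <= t0 <= d0 -> d <= e ->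
  (forall s t, Rect t0 d s t -> 0 < ucomp s t /\ 0 < cr s t) -> Sm (Rect t0 d) Gi.
Proof.
intros Ht0 Hde Hpos.
assert (Hsub := Rect_sub t0 d Ht0 Hde). assert (HR := Rect_open t0 d).
apply (Sm_ext _ (fun s t => (ucomp s t * ucomp s t) * / cr s t)); auto.
intros s t _. cbv beta. unfold Gi, ucomp, cr. unfold Rdiv. ring.
apply Sm_mult; auto. apply Sm_mult; auto; apply Sm_ucomp; auto.
apply Sm_inv; auto. intros s t Hst. destruct (Hpos s t Hst). lra.
apply Sm_cr; auto.
Qed.

Definition Fhat t := RInt (fun s => Gi s t) 0 (2 * L).
Definition gfun t := RInt (fun s => d_t Gi s t) 0 (2 * L).

Lemma M2 t0 : c0 <= t0 <= d0 -> is_derive Fhat t0 (gfun t0).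
Proof.
intro Ht0. destruct (tube_t0 t0 Ht0) as [d [Hd [Hde Hpos]]].
assert (HL0 := L_pos).
apply (param_deriv (Rect t0 d) Gi t0 0 (2 * L) d); try lra.
apply Rect_open. apply Sm_Gi; auto.
intros s t Hs Ht. apply Rabs_def2 in Ht. unfold Rect; lra.
Qed.

Lemma M3 : is_derive gfun 0 (RInt (fun s => d_t (d_t Gi) s 0) 0 (2 * L)).
Proof.
assert (Ht0 : c0 <= 0 <= d0) by lra.
destruct (tube_t0 0 Ht0) as [d [Hd [Hde Hpos]]].
assert (HL0 := L_pos).
apply (param_deriv (Rect 0 d) (d_t Gi) 0 0 (2 * L) d); try lra.
apply Rect_open. apply Sm_dt, Sm_Gi; auto.
intros s t Hs Ht. apply Rabs_def2 in Ht. unfold Rect; lra.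
Qed.

Lemma M1 t : c0 <= t <= d0 -> Fvar L Vx Vy t = Fhat t.
Proof.
intro Ht. unfold Fvar, energyF, Fhat. apply RInt_ext.
intros s Hs. rewrite Rmin_left, Rmax_right in Hs by (assert (HL0 := L_pos); lra).
destruct (adm_pos t Ht s ltac:(lra)) as [Hu Hc].
unfold curv, speed.
change (sqrt (d_s Vx s t ^ 2 + d_s Vy s t ^ 2) /
  ((d_s Vx s t * d_s (d_s Vy) s t + d_s Vy s t * - d_s (d_s Vx) s t) /
   sqrt (d_s Vx s t ^ 2 + d_s Vy s t ^ 2) ^ 3) = Gi s t).
unfold Gi. unfold ucomp, cr in *.
assert (Hsq := sqrt_sqrt _ (Rlt_le _ _ Hu)).
assert (Hsp := sqrt_lt_R0 _ Hu).
set (r := sqrt (d_s Vx s t ^ 2 + d_s Vy s t ^ 2)) in *.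
rewrite <- Hsq. field. split; lra.
Qed.

Lemma DmC u : 0 <= u <= 2 * L -> Dm x0 L u.
Proof. intro H. apply Dm_int. assert (Hk := k_gt x0 L Hx0 HL). lra. Qed.

Lemma int_loc s (P : R -> Prop) : 0 < s < 2 * L -> (forall u, 0 < u < 2 * L -> P u) -> locally s P.
Proof.
intros Hs HP. exists (mkposreal (Rmin s (2 * L - s)) ltac:(apply Rmin_glb_lt; lra)).
intros u Hu. apply HP. 
assert (Rabs (u - s) < Rmin s (2 * L - s)) by exact Hu.
assert (Rmin s (2 * L - s) <= s) by apply Rmin_l.
assert (Rmin s (2 * L - s) <= 2 * L - s) by apply Rmin_r.
apply Rabs_def2 in H. lra.
Qed.

Lemma sm_d (f : R -> R) n u : smooth_near 0 (2 * L) f -> 0 <= u <= 2 * L -> ex_derive_n f n u.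
Proof. intros [eps [Heps H]] Hu. apply H. lra. Qed.

Lemma sm_d1 (f : R -> R) u : smooth_near 0 (2 * L) f -> 0 <= u <= 2 * L -> is_derive f u (Derive f u).
Proof. intros Hf Hu. apply Derive_correct. exact (sm_d f 1 u Hf Hu). Qed.
Lemma sm_d2 (f : R -> R) u : smooth_near 0 (2 * L) f -> 0 <= u <= 2 * L ->
  is_derive (Derive f) u (Derive (Derive f) u).
Proof. intros Hf Hu. apply Derive_correct. exact (sm_d f 2 u Hf Hu). Qed.
Lemma sm_d3 (f : R -> R) u : smooth_near 0 (2 * L) f -> 0 <= u <= 2 * L ->
  is_derive (Derive (Derive f)) u (Derive (Derive (Derive f)) u).
Proof. intros Hf Hu. apply Derive_correct. exact (sm_d f 3 u Hf Hu). Qed.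

Let TH := th x0 L.
Let HH := hh x0 L.
Let AL := alp x0 L.

Lemma first_x (v A B : R -> R) s : (forall u, 0 < u < 2 * L -> v u = A u * sin (TH u) + B u * cos (TH u)) ->
  (forall u, 0 < u < 2 * L -> is_derive A u (Derive A u) /\ is_derive B u (Derive B u)) ->
  0 < s < 2 * L -> forall u, 0 < u < 2 * L ->
  Derive v u = (Derive A u - HH u * B u) * sin (TH u) + (HH u * A u + Derive B u) * cos (TH u).
Proof.
intros Hv HAB Hs u Hu. rewrite (Derive_ext_loc _ (fun u => A u * sin (TH u) + B u * cos (TH u))).
apply is_derive_unique. destruct (HAB u Hu). apply rot_x; auto. apply is_derive_th; auto. apply DmC; lra.
apply int_loc; auto.
Qed.

Lemma first_y (v A B : R -> R) s : (forall u, 0 < u < 2 * L -> v u = - A u * cos (TH u) + B u * sin (TH u)) ->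
  (forall u, 0 < u < 2 * L -> is_derive A u (Derive A u) /\ is_derive B u (Derive B u)) ->
  0 < s < 2 * L -> forall u, 0 < u < 2 * L ->
  Derive v u = - (Derive A u - HH u * B u) * cos (TH u) + (HH u * A u + Derive B u) * sin (TH u).
Proof.
intros Hv HAB Hs u Hu. rewrite (Derive_ext_loc _ (fun u => - A u * cos (TH u) + B u * sin (TH u))).
apply is_derive_unique. destruct (HAB u Hu). apply rot_y; auto. apply is_derive_th; auto. apply DmC; lra.
apply int_loc; auto.
Qed.

Lemma dA (f1 p hh : R -> R) s f2 p1 h1 : is_derive f1 s f2 -> is_derive p s p1 -> is_derive hh s h1 ->
  is_derive (fun u => f1 u - hh u * p u) s (f2 - (h1 * p s + hh s * p1)).
Proof. intros H1 H2 H3. auto_derive. repeat split; eauto using exd_of. rwD H1. rwD H2. rwD H3. ring. Qed.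

Lemma dB (f p1 hh : R -> R) s f1 p2 h1 : is_derive f s f1 -> is_derive p1 s p2 -> is_derive hh s h1 ->
  is_derive (fun u => hh u * f u + p1 u) s (h1 * f s + hh s * f1 + p2).
Proof. intros H1 H2 H3. auto_derive. repeat split; eauto using exd_of. rwD H1. rwD H2. rwD H3. ring. Qed.

Lemma second_x (v A B : R -> R) s : (forall u, 0 < u < 2 * L -> v u = A u * sin (TH u) + B u * cos (TH u)) ->
  smooth_near 0 (2 * L) A -> smooth_near 0 (2 * L) B -> 0 < s < 2 * L ->
  Derive (Derive v) s =
   ((Derive (Derive A) s - (AL * (s - L) * HH s ^ 3 * B s + HH s * Derive B s)) - HH s * (HH s * A s + Derive B s)) * sin (TH s)
   + (HH s * (Derive A s - HH s * B s) + (AL * (s - L) * HH s ^ 3 * A s + HH s * Derive A s + Derive (Derive B) s)) * cos (TH s).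
Proof.
intros Hv HA HB Hs.
assert (HAB : forall u, 0 < u < 2 * L -> is_derive A u (Derive A u) /\ is_derive B u (Derive B u)).
{ intros u Hu; split; apply sm_d1; auto; lra. }
rewrite (Derive_ext_loc _ (fun u => (fun u => Derive A u - HH u * B u) u * sin (TH u) + (fun u => HH u * A u + Derive B u) u * cos (TH u))).
2:{ apply int_loc; auto. intros u Hu. apply (first_x v A B s); auto. }
apply is_derive_unique.
assert (Hs' : 0 <= s <= 2 * L) by lra.
apply (rot_x (fun u => Derive A u - HH u * B u) (fun u => HH u * A u + Derive B u) TH s
  (Derive (Derive A) s - (AL * (s - L) * HH s ^ 3 * B s + HH s * Derive B s))
  (AL * (s - L) * HH s ^ 3 * A s + HH s * Derive A s + Derive (Derive B) s) (HH s)).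
- apply dA. apply sm_d2; auto. apply sm_d1; auto. apply hh_deriv; auto. apply DmC; auto.
- apply dB. apply sm_d1; auto. apply sm_d2; auto. apply hh_deriv; auto. apply DmC; auto.
- apply is_derive_th; auto. apply DmC; auto.
Qed.

Lemma second_y (v A B : R -> R) s : (forall u, 0 < u < 2 * L -> v u = - A u * cos (TH u) + B u * sin (TH u)) ->
  smooth_near 0 (2 * L) A -> smooth_near 0 (2 * L) B -> 0 < s < 2 * L ->
  Derive (Derive v) s =
   - ((Derive (Derive A) s - (AL * (s - L) * HH s ^ 3 * B s + HH s * Derive B s)) - HH s * (HH s * A s + Derive B s)) * cos (TH s)
   + (HH s * (Derive A s - HH s * B s) + (AL * (s - L) * HH s ^ 3 * A s + HH s * Derive A s + Derive (Derive B) s)) * sin (TH s).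
Proof.
intros Hv HA HB Hs.
assert (HAB : forall u, 0 < u < 2 * L -> is_derive A u (Derive A u) /\ is_derive B u (Derive B u)).
{ intros u Hu; split; apply sm_d1; auto; lra. }
rewrite (Derive_ext_loc _ (fun u => - (fun u => Derive A u - HH u * B u) u * cos (TH u) + (fun u => HH u * A u + Derive B u) u * sin (TH u))).
2:{ apply int_loc; auto. intros u Hu. apply (first_y v A B s); auto. }
apply is_derive_unique.
assert (Hs' : 0 <= s <= 2 * L) by lra.
apply (rot_y (fun u => Derive A u - HH u * B u) (fun u => HH u * A u + Derive B u) TH s
  (Derive (Derive A) s - (AL * (s - L) * HH s ^ 3 * B s + HH s * Derive B s))
  (AL * (s - L) * HH s ^ 3 * A s + HH s * Derive A s + Derive (Derive B) s) (HH s)).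
- apply dA. apply sm_d2; auto. apply sm_d1; auto. apply hh_deriv; auto. apply DmC; auto.
- apply dB. apply sm_d1; auto. apply sm_d2; auto. apply hh_deriv; auto. apply DmC; auto.
- apply is_derive_th; auto. apply DmC; auto.
Qed.

Lemma vel_x u : 0 < u < 2 * L -> vel Vx u = phi u * sin (TH u) + phit u * cos (TH u).
Proof. intro Hu. destruct (Hvel u ltac:(lra)) as [E _]. rewrite E, nx_g, Dx; auto; apply DmC; lra. Qed.
Lemma vel_y u : 0 < u < 2 * L -> vel Vy u = - phi u * cos (TH u) + phit u * sin (TH u).
Proof. intro Hu. destruct (Hvel u ltac:(lra)) as [_ E]. rewrite E, ny_g, Dy; auto; try (apply DmC; lra). unfold TH. ring. Qed.
Lemma acc_x u : 0 < u < 2 * L -> acc Vx u = psi u * sin (TH u) + psit u * cos (TH u).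
Proof. intro Hu. destruct (Hacc u ltac:(lra)) as [E _]. rewrite E, nx_g, Dx; auto; apply DmC; lra. Qed.
Lemma acc_y u : 0 < u < 2 * L -> acc Vy u = - psi u * cos (TH u) + psit u * sin (TH u).
Proof. intro Hu. destruct (Hacc u ltac:(lra)) as [_ E]. rewrite E, ny_g, Dy; auto; try (apply DmC; lra). unfold TH. ring. Qed.

Lemma vax u : 0 < u < 2 * L -> d_s Vx u 0 = cos (TH u).
Proof.
intro Hu. unfold d_s. rewrite (Derive_ext_loc _ (gam_x x0 L)). apply Dx; auto. apply DmC; lra.
apply int_loc; auto. intros w Hw. apply Hinit; lra.
Qed.
Lemma vay u : 0 < u < 2 * L -> d_s Vy u 0 = sin (TH u).
Proof.
intro Hu. unfold d_s. rewrite (Derive_ext_loc _ (gam_y x0 L)). apply Dy; auto. apply DmC; lra.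
apply int_loc; auto. intros w Hw. apply Hinit; lra.
Qed.
Lemma vbx u : 0 < u < 2 * L -> d_s (d_s Vx) u 0 = - sin (TH u) * HH u.
Proof.
intro Hu. unfold d_s at 1. rewrite (Derive_ext_loc _ (Derive (gam_x x0 L))). apply DDx; auto. apply DmC; lra.
apply int_loc; auto. intros w Hw. rewrite vax by auto. symmetry. apply Dx; auto. apply DmC; lra.
Qed.
Lemma vby u : 0 < u < 2 * L -> d_s (d_s Vy) u 0 = cos (TH u) * HH u.
Proof.
intro Hu. unfold d_s at 1. rewrite (Derive_ext_loc _ (Derive (gam_y x0 L))). apply DDy; auto. apply DmC; lra.
apply int_loc; auto. intros w Hw. rewrite vay by auto. symmetry. apply Dy; auto. apply DmC; lra.
Qed.

Lemma HAB_of (A B : R -> R) : smooth_near 0 (2 * L) A -> smooth_near 0 (2 * L) B ->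
  forall u, 0 < u < 2 * L -> is_derive A u (Derive A u) /\ is_derive B u (Derive B u).
Proof. intros HA HB u Hu; split; apply sm_d1; auto; lra. Qed.

Lemma pointwise s : 0 < s < 2 * L ->
  d_t (d_t Gi) s 0 = Kv AL L s (HH s) (phi s) (Derive phi s) (Derive (Derive phi) s)
    (phit s) (Derive phit s) (Derive (Derive phit) s) (psi s) (Derive psi s) (Derive (Derive psi) s)
    (psit s) (Derive psit s).
Proof.
intro Hs. assert (Ht0 : c0 <= 0 <= d0) by lra.
destruct (tube_t0 0 Ht0) as [d [Hd [Hde Hpos]]].
set (R0 := Rect 0 d). assert (HR : openR R0) by apply Rect_open.
assert (Hsub := Rect_sub 0 d Ht0 Hde).
assert (SX : Sm R0 Vx) by (apply (Sm_sub U0); auto; exact HVx).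
assert (SY : Sm R0 Vy) by (apply (Sm_sub U0); auto; exact HVy).
assert (Hs0 : R0 s 0) by (unfold R0, Rect; lra).
assert (HG := G2 (fun t => d_s Vx s t) (fun t => d_s Vy s t) (fun t => d_s (d_s Vx) s t)
  (fun t => d_s (d_s Vy) s t) (fun t => d_t (d_s Vx) s t) (fun t => d_t (d_s Vy) s t)
  (fun t => d_t (d_s (d_s Vx)) s t) (fun t => d_t (d_s (d_s Vy)) s t)
  (d_t (d_t (d_s Vx)) s 0) (d_t (d_t (d_s Vy)) s 0)
  (d_t (d_t (d_s (d_s Vx))) s 0) (d_t (d_t (d_s (d_s Vy))) s 0)).
transitivity (G2f (d_s Vx s 0) (d_s Vy s 0) (d_s (d_s Vx) s 0) (d_s (d_s Vy) s 0)
  (d_t (d_s Vx) s 0) (d_t (d_s Vy) s 0) (d_t (d_s (d_s Vx)) s 0) (d_t (d_s (d_s Vy)) s 0)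
  (d_t (d_t (d_s Vx)) s 0) (d_t (d_t (d_s Vy)) s 0)
  (d_t (d_t (d_s (d_s Vx))) s 0) (d_t (d_t (d_s (d_s Vy))) s 0)).
{ apply is_derive_unique. apply HG.
  - apply (openR_loc_t R0 _ s 0 HR Hs0). intros t' Ht'.
    repeat split; try (apply Derive_correct; apply (Sm_ext' R0); auto using Sm_ds).
    destruct (Hpos s t' Ht'). unfold cr in *. lra.
  - apply Derive_correct; apply (Sm_ext' R0); auto using Sm_ds, Sm_dt.
  - apply Derive_correct; apply (Sm_ext' R0); auto using Sm_ds, Sm_dt.
  - apply Derive_correct; apply (Sm_ext' R0); auto using Sm_ds, Sm_dt.
  - apply Derive_correct; apply (Sm_ext' R0); auto using Sm_ds, Sm_dt. }
rewrite (sw1 R0 Vx), (sw1 R0 Vy), (sw2 R0 Vx), (sw2 R0 Vy), (sw3 R0 Vx), (sw3 R0 Vy),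
  (sw4 R0 Vx), (sw4 R0 Vy) by auto.
change (d_s (d_t Vx) s 0) with (Derive (vel Vx) s).
change (d_s (d_t Vy) s 0) with (Derive (vel Vy) s).
change (d_s (d_s (d_t Vx)) s 0) with (Derive (Derive (vel Vx)) s).
change (d_s (d_s (d_t Vy)) s 0) with (Derive (Derive (vel Vy)) s).
change (d_s (d_t (d_t Vx)) s 0) with (Derive (acc Vx) s).
change (d_s (d_t (d_t Vy)) s 0) with (Derive (acc Vy) s).
change (d_s (d_s (d_t (d_t Vx))) s 0) with (Derive (Derive (acc Vx)) s).
change (d_s (d_s (d_t (d_t Vy))) s 0) with (Derive (Derive (acc Vy)) s).
rewrite vax, vay, vbx, vby by auto.
rewrite (first_x (vel Vx) phi phit s vel_x (HAB_of phi phit Hphi Hphit) Hs s Hs).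
rewrite (first_y (vel Vy) phi phit s vel_y (HAB_of phi phit Hphi Hphit) Hs s Hs).
rewrite (first_x (acc Vx) psi psit s acc_x (HAB_of psi psit Hpsi Hpsit) Hs s Hs).
rewrite (first_y (acc Vy) psi psit s acc_y (HAB_of psi psit Hpsi Hpsit) Hs s Hs).
rewrite (second_x (vel Vx) phi phit s vel_x Hphi Hphit Hs).
rewrite (second_y (vel Vy) phi phit s vel_y Hphi Hphit Hs).
rewrite (second_x (acc Vx) psi psit s acc_x Hpsi Hpsit Hs).
rewrite (second_y (acc Vy) psi psit s acc_y Hpsi Hpsit Hs).
rewrite key1.
- unfold Kv. cbv zeta. reflexivity.
- rewrite <- (sin2_cos2 (TH s)). unfold Rsqr. ring.
Qed.

Lemma cont_f (f : R -> R) u : smooth_near 0 (2 * L) f -> 0 <= u <= 2 * L ->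
  continuous f u /\ continuous (Derive f) u /\ continuous (Derive (Derive f)) u.
Proof.
intros Hf Hu. split; [|split]; apply (@ex_derive_continuous R_AbsRing R_NormedModule).
exact (sm_d f 1 u Hf Hu). exact (sm_d f 2 u Hf Hu). exact (sm_d f 3 u Hf Hu).
Qed.

Lemma cont_HH u : 0 <= u <= 2 * L -> continuous HH u.
Proof. intro Hu. apply (@ex_derive_continuous R_AbsRing R_NormedModule). eexists. apply hh_deriv; auto. apply DmC; auto. Qed.

Ltac leaf Hu := first [ apply (proj1 (cont_f _ _ Hphi Hu)) | apply (proj1 (proj2 (cont_f _ _ Hphi Hu)))
  | apply (proj2 (proj2 (cont_f _ _ Hphi Hu)))
  | apply (proj1 (cont_f _ _ Hphit Hu)) | apply (proj1 (proj2 (cont_f _ _ Hphit Hu)))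
  | apply (proj2 (proj2 (cont_f _ _ Hphit Hu)))
  | apply (proj1 (cont_f _ _ Hpsi Hu)) | apply (proj1 (proj2 (cont_f _ _ Hpsi Hu)))
  | apply (proj2 (proj2 (cont_f _ _ Hpsi Hu)))
  | apply (proj1 (cont_f _ _ Hpsit Hu)) | apply (proj1 (proj2 (cont_f _ _ Hpsit Hu)))
  | apply (proj2 (proj2 (cont_f _ _ Hpsit Hu)))
  | apply (cont_HH _ Hu) ].

Definition Ef s := Ev AL (HH s) (phi s) (Derive phi s) (Derive (Derive phi) s) (phit s) (Derive phit s) (psi s).
Definition Kf s := Kv AL L s (HH s) (phi s) (Derive phi s) (Derive (Derive phi) s)
    (phit s) (Derive phit s) (Derive (Derive phit) s) (psi s) (Derive psi s) (Derive (Derive psi) s)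
    (psit s) (Derive psit s).
Definition Qf := Qfun AL L phi (Derive phi) phit (Derive phit) psi (Derive psi) psit HH.

Lemma KE_cont u : 0 <= u <= 2 * L -> continuous (fun s => Kf s - Ef s) u.
Proof.
intro Hu. assert (Hh := hh_pos x0 L Hx0 HL u (DmC u Hu)). fold HH in Hh.
unfold Kf, Ef, Kv, Ev, G2core. cbv zeta. cont.
all: try leaf Hu.
all: cbv beta; try (apply pow_nonzero); lra.
Qed.

Lemma E_cont u : 0 <= u <= 2 * L -> continuous Ef u.
Proof.
intro Hu. assert (Hh := hh_pos x0 L Hx0 HL u (DmC u Hu)). fold HH in Hh.
unfold Ef, Ev. cont.
all: try leaf Hu.
all: cbv beta; try (apply pow_nonzero); lra.
Qed.

Lemma Qd u : 0 <= u <= 2 * L -> is_derive Qf u (Kf u - Ef u).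
Proof.
intro Hu. unfold Qf, Kf, Ef.
apply (Q_deriv AL L phi (Derive phi) phit (Derive phit) psi (Derive psi) psit HH u).
exact (sm_d1 phi u Hphi Hu). exact (sm_d2 phi u Hphi Hu).
exact (sm_d1 phit u Hphit Hu). exact (sm_d2 phit u Hphit Hu).
exact (sm_d1 psi u Hpsi Hu). exact (sm_d2 psi u Hpsi Hu).
exact (sm_d1 psit u Hpsit Hu).
apply hh_deriv; auto. apply DmC; auto.
assert (Hh := hh_pos x0 L Hx0 HL u (DmC u Hu)). fold HH in Hh. lra.
Qed.

Lemma int_K : RInt (fun s => d_t (d_t Gi) s 0) 0 (2 * L) = RInt Ef 0 (2 * L) + (Qf (2 * L) - Qf 0).
Proof.
assert (HL0 := L_pos).
rewrite (RInt_ext _ (fun s => Ef s + (Kf s - Ef s))).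
2:{ intros s Hs. rewrite Rmin_left, Rmax_right in Hs by lra. rewrite pointwise by auto. change (Kf s = Ef s + (Kf s - Ef s)). ring. }
destruct (RIntR_derive Qf (fun s => Kf s - Ef s) 0 (2 * L)) as [H1 H2]; try lra.
exact Qd. exact KE_cont.
rewrite RIntR_plus; auto. rewrite H2. reflexivity.
apply ex_RIntR_cont; try lra. exact E_cont.
Qed.

Lemma alp_val : AL = x0 / (L + x0).
Proof.
unfold AL, alp, sigma0. assert (Hpi := PI_RGT_0).
assert (Hr : 0 <= x0 / (L + x0)) by (apply Rlt_le, Rdiv_lt_0_compat; lra).
replace ((PI * sqrt (x0 / (L + x0))) ^ 2) with (PI ^ 2 * (sqrt (x0 / (L + x0)) * sqrt (x0 / (L + x0)))) by ring.
rewrite sqrt_sqrt by auto. field. lra.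
Qed.

Lemma lam_val : lambda0 x0 L = 2 - 2 * AL.
Proof. rewrite alp_val. unfold lambda0. field. lra. Qed.

Lemma int_E : RInt Ef 0 (2 * L) =
  I1 L (gam_x x0 L) (gam_y x0 L) phi + lambda0 x0 L * I2 L (gam_x x0 L) (gam_y x0 L) phi phit psi.
Proof.
assert (HL0 := L_pos). rewrite lam_val. unfold I1, I2.
set (f1 := fun s => 2 * HH s * phi s ^ 2 - 2 * Derive phi s ^ 2 / HH s + 2 * Derive (Derive phi) s ^ 2 / HH s ^ 3).
set (f2 := fun s => psi s + HH s * phit s ^ 2 + 2 * phi s * Derive phit s).
rewrite (RInt_ext (fun s => 2 * curv (gam_x x0 L) (gam_y x0 L) s * phi s ^ 2 - _ + _) f1).
2:{ intros s Hs. rewrite Rmin_left, Rmax_right in Hs by lra. unfold f1. rewrite curv_g; auto. apply DmC; lra. }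
rewrite (RInt_ext (fun s => psi s + curv (gam_x x0 L) (gam_y x0 L) s * phit s ^ 2 + _) f2).
2:{ intros s Hs. rewrite Rmin_left, Rmax_right in Hs by lra. unfold f2. rewrite curv_g; auto. apply DmC; lra. }
assert (E1 : ex_RInt f1 0 (2 * L)).
{ apply ex_RIntR_cont; try lra. intros u Hu. assert (Hh := hh_pos x0 L Hx0 HL u (DmC u Hu)). fold HH in Hh.
  unfold f1. cont. all: try leaf Hu. all: cbv beta; try (apply pow_nonzero); lra. }
assert (E2 : ex_RInt f2 0 (2 * L)).
{ apply ex_RIntR_cont; try lra. intros u Hu. assert (Hh := hh_pos x0 L Hx0 HL u (DmC u Hu)). fold HH in Hh.
  unfold f2. cont. all: try leaf Hu. all: cbv beta; try (apply pow_nonzero); lra. }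
rewrite <- RIntR_scal by auto. rewrite <- RIntR_plus; auto.
exact (ex_RInt_scal f2 0 (2 * L) (2 - 2 * AL) E2).
Qed.

Lemma const_der (f : R -> R) a l d c : is_derive f a l -> 0 < d ->
  (forall t, a <= t < a + d -> f t = c) -> l = 0.
Proof.
intros Hf Hd H. apply (rdiff_agree f (fun _ => c) a l 0 d Hf); auto.
exact (is_derive_const c a).
Qed.

Lemma end_va (W : R -> R -> R) s0 cst : Sm U0 W -> 0 <= s0 <= 2 * L ->
  (forall t, 0 <= t <= d0 -> W s0 t = cst) -> vel W s0 = 0 /\ acc W s0 = 0.
Proof.
intros SW Hs0 HW.
assert (HU : forall t, 0 <= t < d0 -> U0 s0 t) by (intros; unfold U0; lra).
assert (V0 : vel W s0 = 0).
{ apply (const_der (fun t => W s0 t) 0 _ d0 cst); auto.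
  apply Derive_correct. apply (Sm_ext' U0 W s0 0); auto. apply HU; lra.
  intros t Ht. apply HW; lra. }
split; auto.
apply (const_der (fun t => d_t W s0 t) 0 _ d0 0); auto.
apply Derive_correct. apply (Sm_ext' U0 (d_t W) s0 0); auto using Sm_dt. apply HU; lra.
intros t [Ht1 Ht2]. destruct (Rle_lt_or_eq_dec 0 t Ht1) as [Hp|<-]; [|exact V0].
unfold d_t. rewrite (Derive_ext_loc _ (fun _ => cst)). apply Derive_const.
exists (mkposreal (Rmin t (d0 - t)) ltac:(apply Rmin_glb_lt; lra)). intros u Hu. apply HW.
assert (Hu' : Rabs (u - t) < Rmin t (d0 - t)) by exact Hu. apply Rabs_def2 in Hu'.
assert (Rmin t (d0 - t) <= t) by apply Rmin_l. assert (Rmin t (d0 - t) <= d0 - t) by apply Rmin_r. lra.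
Qed.

Lemma ends : phi 0 = 0 /\ phit 0 = 0 /\ psi 0 = 0 /\ psit 0 = 0 /\
  phi (2 * L) = 0 /\ phit (2 * L) = 0 /\ psi (2 * L) = 0 /\ psit (2 * L) = 0.
Proof.
assert (HL0 := L_pos).
assert (A0 : 0 <= 0 <= 2 * L) by lra. assert (A2 : 0 <= 2 * L <= 2 * L) by lra.
assert (HWx0 : forall t, 0 <= t <= d0 -> Vx 0 t = x0).
{ intros t Ht. destruct (Hadm t ltac:(lra)) as [_ [_ [_ [_ [_ [H _]]]]]]. exact H. }
assert (HWy0 : forall t, 0 <= t <= d0 -> Vy 0 t = 0).
{ intros t Ht. destruct (Hadm t ltac:(lra)) as [_ [_ [_ [_ [_ [_ [H _]]]]]]]. exact H. }
assert (HWx2 : forall t, 0 <= t <= d0 -> Vx (2 * L) t = - x0).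
{ intros t Ht. destruct (Hadm t ltac:(lra)) as [_ [_ [_ [_ [_ [_ [_ [H _]]]]]]]]. exact H. }
assert (HWy2 : forall t, 0 <= t <= d0 -> Vy (2 * L) t = 0).
{ intros t Ht. destruct (Hadm t ltac:(lra)) as [_ [_ [_ [_ [_ [_ [_ [_ [H _]]]]]]]]]. exact H. }
destruct (end_va Vx 0 x0 SVx A0 HWx0) as [vx0 ax0].
destruct (end_va Vy 0 0 SVy A0 HWy0) as [vy0 ay0].
destruct (end_va Vx (2 * L) (- x0) SVx A2 HWx2) as [vx2 ax2].
destruct (end_va Vy (2 * L) 0 SVy A2 HWy2) as [vy2 ay2].
destruct (Hvel 0 A0) as [Ev1 Ev2]. destruct (Hacc 0 A0) as [Ea1 Ea2].
destruct (Hvel (2 * L) A2) as [Fv1 Fv2]. destruct (Hacc (2 * L) A2) as [Fa1 Fa2].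
assert (D0 := DmC 0 A0). assert (D2 := DmC (2 * L) A2).
rewrite nx_g, Dx in Ev1, Ea1, Fv1, Fa1 by auto.
rewrite ny_g, Dy in Ev2, Ea2, Fv2, Fa2 by auto.
rewrite (th_0 x0 L Hx0 HL) in Ev1, Ev2, Ea1, Ea2.
rewrite (th_2L x0 L Hx0 HL) in Fv1, Fv2, Fa1, Fa2.
rewrite sin_0, cos_0 in Ev1, Ev2, Ea1, Ea2.
rewrite sin_2PI, cos_2PI in Fv1, Fv2, Fa1, Fa2.
repeat split; lra.
Qed.

Lemma Qf_end u : 0 <= u <= 2 * L -> phi u = 0 -> phit u = 0 -> psi u = 0 -> psit u = 0 ->
  Qf u = (Derive psi u - 2 * Derive phi u * Derive phit u) / curv (gam_x x0 L) (gam_y x0 L) u ^ 2.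
Proof.
intros Hu H1 H2 H3 H4. rewrite curv_g by (auto; apply DmC; auto).
assert (Hh := hh_pos x0 L Hx0 HL u (DmC u Hu)). fold HH in Hh |- *.
unfold Qf, Qfun. rewrite H1, H2, H3, H4. field. lra.
Qed.

Lemma M_final : RInt (fun s => d_t (d_t Gi) s 0) 0 (2 * L) =
  I1 L (gam_x x0 L) (gam_y x0 L) phi + lambda0 x0 L * I2 L (gam_x x0 L) (gam_y x0 L) phi phit psi
  + ((Derive psi (2 * L) - 2 * Derive phi (2 * L) * Derive phit (2 * L)) / curv (gam_x x0 L) (gam_y x0 L) (2 * L) ^ 2
     - (Derive psi 0 - 2 * Derive phi 0 * Derive phit 0) / curv (gam_x x0 L) (gam_y x0 L) 0 ^ 2).
Proof.
assert (HL0 := L_pos).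
rewrite int_K, int_E.
destruct ends as [e1 [e2 [e3 [e4 [e5 [e6 [e7 e8]]]]]]].
rewrite (Qf_end 0), (Qf_end (2 * L)); auto; lra.
Qed.

Lemma rot_val_y (A B : R -> R) u : smooth_near 0 (2 * L) A -> smooth_near 0 (2 * L) B -> 0 <= u <= 2 * L ->
  is_derive (fun w => - A w * cos (TH w) + B w * sin (TH w)) u
    (- (Derive A u - HH u * B u) * cos (TH u) + (HH u * A u + Derive B u) * sin (TH u)).
Proof.
intros HA HB Hu. apply rot_y. apply sm_d1; auto. apply sm_d1; auto. apply is_derive_th; auto. apply DmC; auto.
Qed.

Lemma pack : (forall t, c0 <= t <= d0 -> Fvar L Vx Vy t = Fhat t) /\
  (forall t, c0 <= t <= d0 -> is_derive Fhat t (gfun t)) /\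
  is_derive gfun 0 (RInt (fun s => d_t (d_t Gi) s 0) 0 (2 * L)) /\
  RInt (fun s => d_t (d_t Gi) s 0) 0 (2 * L) =
  I1 L (gam_x x0 L) (gam_y x0 L) phi + lambda0 x0 L * I2 L (gam_x x0 L) (gam_y x0 L) phi phit psi
  + ((Derive psi (2 * L) - 2 * Derive phi (2 * L) * Derive phit (2 * L)) / curv (gam_x x0 L) (gam_y x0 L) (2 * L) ^ 2
     - (Derive psi 0 - 2 * Derive phi 0 * Derive phit 0) / curv (gam_x x0 L) (gam_y x0 L) 0 ^ 2).
Proof.
split; [exact M1|]. split; [exact M2|]. split; [exact M3|]. exact M_final.
Qed.

Section TwoSided.
Hypothesis Hc0n : c0 < 0.

Let dd := Rmin (- c0) d0.
Lemma dd_pos : 0 < dd.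
Proof. unfold dd. apply Rmin_glb_lt; lra. Qed.
Lemma dd_in t : Rabs t < dd -> c0 <= t <= d0.
Proof.
intro H. apply Rabs_def2 in H. unfold dd in H.
assert (Rmin (- c0) d0 <= - c0) by apply Rmin_l. assert (Rmin (- c0) d0 <= d0) by apply Rmin_r. lra.
Qed.

Lemma two_sided_ends : Derive phi 0 = 0 /\ Derive phi (2 * L) = 0 /\
  Derive psi 0 <= 0 /\ 0 <= Derive psi (2 * L).
Proof.
assert (HL0 := L_pos). assert (Hdd := dd_pos).
assert (A0 : 0 <= 0 <= 2 * L) by lra. assert (A2 : 0 <= 2 * L <= 2 * L) by lra.
destruct ends as [e1 [e2 [e3 [e4 [e5 [e6 [e7 e8]]]]]]].
assert (HU : forall s t, 0 <= s <= 2 * L -> c0 <= t <= d0 -> U0 s t) by (intros; unfold U0; lra).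
assert (SY1 := Sm_ds U0 Vy SVy). assert (SY2 := Sm_dt U0 _ SY1).
assert (SYt := Sm_dt U0 Vy SVy).
assert (Hy0 : forall t, c0 <= t <= d0 -> Vy 0 t = 0).
{ intros t Ht. destruct (Hadm t Ht) as [_ [_ [_ [_ [_ [_ [H _]]]]]]]. exact H. }
assert (Hy2 : forall t, c0 <= t <= d0 -> Vy (2 * L) t = 0).
{ intros t Ht. destruct (Hadm t Ht) as [_ [_ [_ [_ [_ [_ [_ [_ [H _]]]]]]]]]. exact H. }
assert (Hyp : forall t, c0 <= t <= d0 -> forall s, 0 < s < 2 * L -> 0 < Vy s t).
{ intros t Ht. destruct (Hadm t Ht) as [_ [_ [_ [_ [_ [_ [_ [_ [_ H]]]]]]]]]. exact H. }
assert (Hds : forall s0 t, 0 <= s0 <= 2 * L -> c0 <= t <= d0 -> is_derive (fun s => Vy s t) s0 (d_s Vy s0 t)).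
{ intros s0 t Hs Ht. apply Derive_correct. apply (Sm_exs U0 Vy s0 t SVy). apply HU; auto. }
assert (Hh0 : forall t, c0 <= t <= d0 -> 0 <= d_s Vy 0 t).
{ intros t Ht. apply (rsign (fun s => Vy s t) 0 _ (2 * L) (Hds 0 t A0 Ht)); try lra.
  intros s Hs. rewrite Hy0 by auto. apply Rlt_le, Hyp; auto; lra. }
assert (Hh2 : forall t, c0 <= t <= d0 -> d_s Vy (2 * L) t <= 0).
{ intros t Ht. apply (lsign (fun s => Vy s t) (2 * L) _ (2 * L) (Hds (2 * L) t A2 Ht)); try lra.
  intros s Hs. rewrite Hy2 by auto. apply Rlt_le, Hyp; auto; lra. }
assert (Ht00 : c0 <= 0 <= d0) by lra.
assert (Hv0 : d_s Vy 0 0 = 0).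
{ transitivity (sin (th x0 L 0)); [|rewrite (th_0 x0 L Hx0 HL); apply sin_0].
  apply (rdiff_agree (fun s => Vy s 0) (gam_y x0 L) 0 _ _ (2 * L) (Hds 0 0 A0 Ht00)); try lra.
  apply gy_deriv; auto. apply DmC; lra. intros t Ht. apply Hinit; lra. }
assert (Hv2 : d_s Vy (2 * L) 0 = 0).
{ transitivity (sin (th x0 L (2 * L))); [|rewrite (th_2L x0 L Hx0 HL); apply sin_2PI].
  apply (ldiff_agree (fun s => Vy s 0) (gam_y x0 L) (2 * L) _ _ (2 * L) (Hds (2 * L) 0 A2 Ht00)); try lra.
  apply gy_deriv; auto. apply DmC; lra. intros t Ht. apply Hinit; lra. }
assert (Hdt : forall s0 t, 0 <= s0 <= 2 * L -> c0 <= t <= d0 ->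
   is_derive (fun u => d_s Vy s0 u) t (d_t (d_s Vy) s0 t)).
{ intros s0 t Hs Ht. apply Derive_correct. apply (Sm_ext' U0 _ s0 t SY1). apply HU; auto. }
assert (Hdt2 : forall s0, 0 <= s0 <= 2 * L ->
   is_derive (fun u => d_t (d_s Vy) s0 u) 0 (d_t (d_t (d_s Vy)) s0 0)).
{ intros s0 Hs. apply Derive_correct. apply (Sm_ext' U0 _ s0 0 (Sm_dt U0 _ SY1)). apply HU; auto. }
assert (Hvel_y : forall u, 0 <= u <= 2 * L -> vel Vy u = - phi u * cos (TH u) + phit u * sin (TH u)).
{ intros u Hu. destruct (Hvel u Hu) as [_ E]. rewrite E, ny_g, Dy; auto; try (apply DmC; lra). unfold TH. ring. }
assert (Hacc_y : forall u, 0 <= u <= 2 * L -> acc Vy u = - psi u * cos (TH u) + psit u * sin (TH u)).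
{ intros u Hu. destruct (Hacc u Hu) as [_ E]. rewrite E, ny_g, Dy; auto; try (apply DmC; lra). unfold TH. ring. }
assert (Hvd : forall s0, 0 <= s0 <= 2 * L -> is_derive (vel Vy) s0 (d_s (d_t Vy) s0 0)).
{ intros s0 Hs. apply Derive_correct. apply (Sm_exs U0 _ s0 0 SYt). apply HU; auto. }
assert (Had : forall s0, 0 <= s0 <= 2 * L -> is_derive (acc Vy) s0 (d_s (d_t (d_t Vy)) s0 0)).
{ intros s0 Hs. apply Derive_correct. apply (Sm_exs U0 _ s0 0 (Sm_dt U0 _ SYt)). apply HU; auto. }
assert (T0 := th_0 x0 L Hx0 HL). assert (T2 := th_2L x0 L Hx0 HL). fold TH in T0, T2.
assert (Dv0 : d_s (d_t Vy) 0 0 = - Derive phi 0).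
{ transitivity (- (Derive phi 0 - HH 0 * phit 0) * cos (TH 0) + (HH 0 * phi 0 + Derive phit 0) * sin (TH 0)).
  apply (rdiff_agree (vel Vy) (fun w => - phi w * cos (TH w) + phit w * sin (TH w)) 0 _ _ (2 * L) (Hvd 0 A0)); try lra.
  apply rot_val_y; auto. intros; apply Hvel_y; lra.
  rewrite T0, e2, sin_0, cos_0. ring. }
assert (Da0 : d_s (d_t (d_t Vy)) 0 0 = - Derive psi 0).
{ transitivity (- (Derive psi 0 - HH 0 * psit 0) * cos (TH 0) + (HH 0 * psi 0 + Derive psit 0) * sin (TH 0)).
  apply (rdiff_agree (acc Vy) (fun w => - psi w * cos (TH w) + psit w * sin (TH w)) 0 _ _ (2 * L) (Had 0 A0)); try lra.
  apply rot_val_y; auto. intros; apply Hacc_y; lra.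
  rewrite T0, e4, sin_0, cos_0. ring. }
assert (Dv2 : d_s (d_t Vy) (2 * L) 0 = - Derive phi (2 * L)).
{ transitivity (- (Derive phi (2 * L) - HH (2 * L) * phit (2 * L)) * cos (TH (2 * L)) + (HH (2 * L) * phi (2 * L) + Derive phit (2 * L)) * sin (TH (2 * L))).
  apply (ldiff_agree (vel Vy) (fun w => - phi w * cos (TH w) + phit w * sin (TH w)) (2 * L) _ _ (2 * L) (Hvd (2 * L) A2)); try lra.
  apply rot_val_y; auto. intros; apply Hvel_y; lra.
  rewrite T2, e6, sin_2PI, cos_2PI. ring. }
assert (Da2 : d_s (d_t (d_t Vy)) (2 * L) 0 = - Derive psi (2 * L)).
{ transitivity (- (Derive psi (2 * L) - HH (2 * L) * psit (2 * L)) * cos (TH (2 * L)) + (HH (2 * L) * psi (2 * L) + Derive psit (2 * L)) * sin (TH (2 * L))).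
  apply (ldiff_agree (acc Vy) (fun w => - psi w * cos (TH w) + psit w * sin (TH w)) (2 * L) _ _ (2 * L) (Had (2 * L) A2)); try lra.
  apply rot_val_y; auto. intros; apply Hacc_y; lra.
  rewrite T2, e8, sin_2PI, cos_2PI. ring. }
rewrite <- (sw1 U0 Vy 0 0) in Dv0 by (auto using U0_open, SVy).
rewrite <- (sw1 U0 Vy (2 * L) 0) in Dv2 by (auto using U0_open, SVy).
rewrite <- (sw3 U0 Vy 0 0) in Da0 by (auto using U0_open, SVy).
rewrite <- (sw3 U0 Vy (2 * L) 0) in Da2 by (auto using U0_open, SVy).
assert (Z0 : d_t (d_s Vy) 0 0 = 0).
{ apply (deriv_min (fun u => d_s Vy 0 u) 0 _ dd (Hdt 0 0 A0 Ht00) Hdd).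
  intros t Ht. rewrite Hv0. apply Hh0. apply dd_in. apply Rabs_def1; lra. }
assert (Z2 : d_t (d_s Vy) (2 * L) 0 = 0).
{ apply (deriv_max (fun u => d_s Vy (2 * L) u) 0 _ dd (Hdt (2 * L) 0 A2 Ht00) Hdd).
  intros t Ht. rewrite Hv2. apply Hh2. apply dd_in. apply Rabs_def1; lra. }
assert (S0 : 0 <= d_t (d_t (d_s Vy)) 0 0).
{ apply (second_test (fun u => d_s Vy 0 u) (fun u => d_t (d_s Vy) 0 u) _ dd Hdd).
  intros t Ht. apply Hdt; auto. apply dd_in; auto.
  apply Hdt2; auto. exact Z0.
  intros t Ht. rewrite Hv0. apply Hh0. apply dd_in; auto. }
assert (S2 : d_t (d_t (d_s Vy)) (2 * L) 0 <= 0).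
{ apply (second_test_max (fun u => d_s Vy (2 * L) u) (fun u => d_t (d_s Vy) (2 * L) u) _ dd Hdd).
  intros t Ht. apply Hdt; auto. apply dd_in; auto.
  apply Hdt2; auto. exact Z2.
  intros t Ht. rewrite Hv2. apply Hh2. apply dd_in; auto. }
repeat split; lra.
Qed.
Lemma pack2 : Derive phi 0 = 0 /\ Derive phi (2 * L) = 0 /\
  Derive psi 0 <= 0 /\ 0 <= Derive psi (2 * L).
Proof. exact two_sided_ends. Qed.
End TwoSided.
End Main.


Lemma rderiv_ext (f g : R -> R) t l d : is_rderiv g t l -> 0 < d ->
  (forall h, 0 < h < d -> f (t + h) = g (t + h)) -> f t = g t -> is_rderiv f t l.
Proof.
intros Hg Hd Hfg H0. unfold is_rderiv in *.
eapply filterlim_ext_loc; [|exact Hg].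
exists (mkposreal d Hd). intros h Hh Hpos.
assert (Hh' : Rabs (h - 0) < d) by exact Hh. rewrite Rminus_0_r in Hh'. apply Rabs_def2 in Hh'.
rewrite Hfg, H0 by lra. reflexivity.
Qed.

Lemma merge_sm a b c d (f : R -> R -> R) e1 e : e <= e1 ->
  (forall k, C2k k (fun s t => a - e1 < s < b + e1 /\ c - e1 < t < d + e1) f) ->
  forall k, C2k k (fun s t => a - e < s < b + e /\ c - e < t < d + e) f.
Proof. intros He H k. apply (C2k_sub k (fun s t => a - e1 < s < b + e1 /\ c - e1 < t < d + e1)); auto. intros s t Hst. lra. Qed.

Theorem mainTheorem10 :
  forall x0 L : R, 0 < x0 -> 3 * x0 < L ->
  let x := gam_x x0 L in
  let y := gam_y x0 L in
  let H := curv x y in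
  let lam := lambda0 x0 L in
  (forall (Vx Vy : R -> R -> R) (tV : R) (phi phit psi psit : R -> R),
     one_sided_variation x0 L x y Vx Vy tV ->
     smooth_near 0 (2 * L) phi -> smooth_near 0 (2 * L) phit ->
     smooth_near 0 (2 * L) psi -> smooth_near 0 (2 * L) psit ->
     (forall s, 0 <= s <= 2 * L ->
        vel Vx s = phi s * normal_x x y s + phit s * Derive x s /\
        vel Vy s = phi s * normal_y x y s + phit s * Derive y s) ->
     (forall s, 0 <= s <= 2 * L ->
        acc Vx s = psi s * normal_x x y s + psit s * Derive x s /\
        acc Vy s = psi s * normal_y x y s + psit s * Derive y s) ->
     exists g : R -> R,
       (forall t, 0 <= t < tV -> is_rderiv (Fvar L Vx Vy) t (g t)) /\
       is_rderiv g 0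
         (I1 L x y phi + lam * I2 L x y phi phit psi
          + ((Derive psi (2 * L) - 2 * Derive phi (2 * L) * Derive phit (2 * L))
               / H (2 * L) ^ 2
             - (Derive psi 0 - 2 * Derive phi 0 * Derive phit 0) / H 0 ^ 2)))
  /\
  (forall (Vx Vy : R -> R -> R) (tV : R) (phi phit psi psit : R -> R),
     admissible_variation x0 L x y Vx Vy tV ->
     smooth_near 0 (2 * L) phi -> smooth_near 0 (2 * L) phit ->
     smooth_near 0 (2 * L) psi -> smooth_near 0 (2 * L) psit ->
     (forall s, 0 <= s <= 2 * L ->
        vel Vx s = phi s * normal_x x y s + phit s * Derive x s /\
        vel Vy s = phi s * normal_y x y s + phit s * Derive y s) ->
     (forall s, 0 <= s <= 2 * L ->
        acc Vx s = psi s * normal_x x y s + psit s * Derive x s /\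
        acc Vy s = psi s * normal_y x y s + psit s * Derive y s) ->
     Derive phi 0 = 0 /\ Derive phi (2 * L) = 0 /\
     Derive psi 0 <= 0 /\ 0 <= Derive psi (2 * L) /\
     exists (g : R -> R) (d2 : R),
       (forall t, - tV < t < tV -> is_derive (Fvar L Vx Vy) t (g t)) /\
       is_derive g 0 d2 /\
       d2 = I1 L x y phi + lam * I2 L x y phi phit psi
            + (Derive psi (2 * L) / H (2 * L) ^ 2 - Derive psi 0 / H 0 ^ 2) /\
       I1 L x y phi + lam * I2 L x y phi phit psi <= d2).
Proof.
intros x0 L Hx0 HL. cbv zeta. split.
- intros Vx Vy tV phi phit psi psit [HtV [[e1 [He1 HVx]] [[e2 [He2 HVy]] [Hinit Hadm]]]]
    Hphi Hphit Hpsi Hpsit Hvel Hacc.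
  set (e := Rmin e1 e2).
  assert (He : 0 < e) by (apply Rmin_glb_lt; auto).
  assert (He1' : e <= e1) by apply Rmin_l. assert (He2' : e <= e2) by apply Rmin_r.
  destruct (pack x0 L Hx0 HL Vx Vy phi phit psi psit 0 tV e ltac:(lra) HtV He
     (merge_sm _ _ _ _ Vx e1 e He1' HVx) (merge_sm _ _ _ _ Vy e2 e He2' HVy)
     Hinit Hadm Hphi Hphit Hpsi Hpsit Hvel Hacc) as [P1 [P2 [P3 P4]]].
  exists (gfun L Vx Vy). split.
  + intros t Ht. apply (rderiv_ext _ (Fhat L Vx Vy) t _ (tV - t)).
    apply is_rderiv_of. apply P2; lra. lra.
    intros h Hh. apply P1; lra. apply P1; lra.
  + rewrite <- P4. apply is_rderiv_of. exact P3.
- intros Vx Vy tV phi phit psi psit [HtV [[e1 [He1 HVx]] [[e2 [He2 HVy]] [Hinit Hadm]]]]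
    Hphi Hphit Hpsi Hpsit Hvel Hacc.
  set (e := Rmin e1 e2).
  assert (He : 0 < e) by (apply Rmin_glb_lt; auto).
  assert (He1' : e <= e1) by apply Rmin_l. assert (He2' : e <= e2) by apply Rmin_r.
  assert (HVx' := merge_sm _ _ _ _ Vx e1 e He1' HVx).
  assert (HVy' := merge_sm _ _ _ _ Vy e2 e He2' HVy).
  destruct (pack x0 L Hx0 HL Vx Vy phi phit psi psit (- tV) tV e ltac:(lra) HtV He
     HVx' HVy' Hinit Hadm Hphi Hphit Hpsi Hpsit Hvel Hacc) as [P1 [P2 [P3 P4]]].
  destruct (pack2 x0 L Hx0 HL Vx Vy phi phit psi psit (- tV) tV e ltac:(lra) HtV He
     HVx' HVy' Hinit Hadm Hphi Hphit Hpsi Hpsit Hvel Hacc ltac:(lra)) as [Q1 [Q2 [Q3 Q4]]].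
  split; [auto|]. split; [auto|]. split; [auto|]. split; [auto|].
  exists (gfun L Vx Vy), (RInt (fun s => d_t (d_t (Gi Vx Vy)) s 0) 0 (2 * L)).
  assert (Hk := k_gt x0 L Hx0 HL).
  assert (Hh0 := hh_pos x0 L Hx0 HL 0 ltac:(apply Dm_int; lra)).
  assert (Hh2 := hh_pos x0 L Hx0 HL (2 * L) ltac:(apply Dm_int; lra)).
  rewrite (curv_g x0 L Hx0 HL 0) in P4 |- * by (apply Dm_int; lra).
  rewrite (curv_g x0 L Hx0 HL (2 * L)) in P4 |- * by (apply Dm_int; lra).
  rewrite Q1, Q2 in P4.
  split; [|split; [|split]].
  + intros t Ht. apply (is_derive_ext_loc (Fhat L Vx Vy)).
    exists (mkposreal (Rmin (t + tV) (tV - t)) ltac:(apply Rmin_glb_lt; lra)).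
    intros u Hu. assert (Hu' : Rabs (u - t) < Rmin (t + tV) (tV - t)) by exact Hu.
    apply Rabs_def2 in Hu'.
    assert (Rmin (t + tV) (tV - t) <= t + tV) by apply Rmin_l.
    assert (Rmin (t + tV) (tV - t) <= tV - t) by apply Rmin_r.
    symmetry. apply P1. lra.
    apply P2. lra.
  + exact P3.
  + rewrite P4. field. split; lra.
  + rewrite P4.
    assert (0 <= Derive psi (2 * L) / hh x0 L (2 * L) ^ 2).
    { apply Rdiv_le_0_compat; auto. apply pow_lt; auto. }
    assert (0 <= - Derive psi 0 / hh x0 L 0 ^ 2).
    { apply Rdiv_le_0_compat; [lra|]. apply pow_lt; auto. }
    assert (E : (Derive psi (2 * L) - 2 * 0 * Derive phit (2 * L)) / hh x0 L (2 * L) ^ 2 -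
      (Derive psi 0 - 2 * 0 * Derive phit 0) / hh x0 L 0 ^ 2 =
      Derive psi (2 * L) / hh x0 L (2 * L) ^ 2 + - Derive psi 0 / hh x0 L 0 ^ 2) by (field; split; lra).
    rewrite E. lra.
Qed.
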